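(* For all integers $t\ge0$, \[|\kappa_2(t+1)-\kappa_2(t)|\le2,\quad |\kappa_3(t+1)-\kappa_3(t)|\le6,\quad |\kappa_4(t+1)-\kappa_4(t)|\le28,\quad |\kappa_5(t+1)-\kappa_5(t)|\le240.\]
   Context: $s(n)$ is the number of $1$s in the binary expansion of $n\ge0$. For integers $j$ and $t\ge0$, $\delta(j,t)=\lim_{N\to\infty}\frac1N|\{0\le n<N: s(n+t)-s(n)=j\}|$, a probability distribution on $\mathbb Z$. $\kappa_j(t)$ denotes the $j$-th cumulant of this distribution, i.e. the real numbers with $\log\sum_{k\in\mathbb Z}\delta(k,t)e^{2\pi i k\vartheta}=\sum_{j\ge0}\frac{\kappa_j(t)}{j!}(2\pi i\vartheta)^j$ for $\vartheta$ near $0$. *)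

(* Defs.v *)
From Stdlib Require Import Reals ZArith.
From Coquelicot Require Import Coquelicot.
Open Scope R_scope.

Fixpoint pos_ones (p : positive) : nat :=
  match p with
  | xH => 1%nat
  | xO q => pos_ones q
  | xI q => S (pos_ones q)
  end.

Definition s (n : nat) : nat :=
  match N.of_nat n with
  | N0 => 0%nat
  | Npos p => pos_ones p
  end.

Fixpoint cnt (j : Z) (t : nat) (N : nat) : nat :=
  match N with
  | O => O
  | S M => (cnt j t M +
            (if Z.eqb (Z.of_nat (s (M + t)) - Z.of_nat (s M))%Z j then 1 else 0))%nat
  end.

Definition delta (j : Z) (t : nat) : R :=
  real (Lim_seq (fun N => INR (cnt j t N) / INR N)).

Definition cexp (z : C) : C :=
  (exp (fst z) * cos (snd z), exp (fst z) * sin (snd z)).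

Definition sumZ (f : Z -> R) : R :=
  Series (fun k => f (Z.of_nat k)) + Series (fun k => f (- Z.of_nat (S k))%Z).

Definition charf (t : nat) (theta : R) : C :=
  (sumZ (fun k => delta k t * cos (2 * PI * IZR k * theta)),
   sumZ (fun k => delta k t * sin (2 * PI * IZR k * theta))).

(* kappa is the cumulant sequence of delta(.,t):
   log charf t theta = sum_{j>=0} kappa_j / j! (2 pi i theta)^j  for theta near 0.
   (Stated by exponentiating: the series converges to L(theta) and exp L(theta)
    = charf t theta.) *)
Definition is_cumulants (t : nat) (kappa : nat -> R) : Prop :=
  exists r : R, 0 < r /\
    forall theta : R, Rabs theta < r ->
      exists L : C,
        is_series (K := C_AbsRing) (V := C_NormedModule)
          (fun j => Cmult (RtoC (kappa j / INR (fact j)))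
                          (pow_n (K := C_Ring) ((0%R, (2 * PI * theta)%R) : C) j)) L
        /\ cexp L = charf t theta.

(* Main.v *)
Require Import Defs.
From Stdlib Require Import Reals.
From Coquelicot Require Import Coquelicot.
From Stdlib Require Import ZArith NArith Lia Lra.
Open Scope R_scope.


Lemma s_double m : s (2*m) = s m.
Proof.
  unfold s. rewrite Nat2N.inj_mul. destruct (N.of_nat m); reflexivity.
Qed.

Lemma s_double1 m : s (2*m+1) = S (s m).
Proof.
  unfold s. rewrite Nat2N.inj_add, Nat2N.inj_mul. destruct (N.of_nat m); reflexivity.
Qed.

Definition cond (j : Z) (t n : nat) : nat :=
  if Z.eqb (Z.of_nat (s (n + t)) - Z.of_nat (s n))%Z j then 1%nat else 0%nat.

Lemma cnt_S j t N : cnt j t (S N) = (cnt j t N + cond j t N)%nat.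
Proof. reflexivity. Qed.

Lemma cnt_le j t N : (cnt j t N <= N)%nat.
Proof.
  induction N; simpl; [lia|]. destruct (Z.eqb _ _); lia.
Qed.

Lemma cnt_even j t N : cnt j (2*t) (2*N) = (2 * cnt j t N)%nat.
Proof.
  induction N. reflexivity.
  replace (2 * S N)%nat with (S (S (2*N))) by lia.
  rewrite !cnt_S, IHN. unfold cond.
  replace (2*N + 2*t)%nat with (2*(N+t))%nat by lia.
  replace (S (2*N) + 2*t)%nat with (2*(N+t)+1)%nat by lia.
  replace (S (2*N))%nat with (2*N+1)%nat by lia.
  rewrite !s_double, !s_double1.
  replace (Z.of_nat (S (s (N + t))) - Z.of_nat (S (s N)))%Z
    with (Z.of_nat (s (N + t)) - Z.of_nat (s N))%Z by lia.
  destruct (Z.eqb _ _); lia.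
Qed.

Lemma cnt_odd j t N :
  cnt j (2*t+1) (2*N) = (cnt (j-1) t N + cnt (j+1) (t+1) N)%nat.
Proof.
  induction N. reflexivity.
  replace (2 * S N)%nat with (S (S (2*N))) by lia.
  rewrite !cnt_S, IHN. unfold cond.
  replace (2*N + (2*t+1))%nat with (2*(N+t)+1)%nat by lia.
  replace (S (2*N) + (2*t+1))%nat with (2*(N+(t+1)))%nat by lia.
  replace (S (2*N))%nat with (2*N+1)%nat by lia.
  rewrite !s_double, !s_double1.
  destruct (Z.eqb (Z.of_nat (S (s (N + t))) - Z.of_nat (s N)) j) eqn:E1;
  destruct (Z.eqb (Z.of_nat (s (N + t)) - Z.of_nat (s N)) (j-1)) eqn:E2;
  destruct (Z.eqb (Z.of_nat (s (N + (t+1))) - Z.of_nat (S (s N))) j) eqn:E3;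
  destruct (Z.eqb (Z.of_nat (s (N + (t+1))) - Z.of_nat (s N)) (j+1)) eqn:E4;
  rewrite ?Z.eqb_eq, ?Z.eqb_neq in *; lia.
Qed.

Lemma s_succ_le n : (s (S n) <= S (s n))%nat.
Proof.
  induction n as [n IH] using (well_founded_induction lt_wf).
  destruct (Nat.Even_or_Odd n) as [[m Hm]|[m Hm]]; subst n.
  - replace (S (2*m)) with (2*m+1)%nat by lia. rewrite s_double1, s_double. lia.
  - replace (S (2*m+1)) with (2*(S m))%nat by lia. rewrite s_double, s_double1.

    assert (H := IH m ltac:(lia)). lia.
Qed.

Lemma cnt_1_big j N : (2 <= j)%Z -> cnt j 1 N = 0%nat.
Proof.
  intros Hj. induction N. reflexivity.
  rewrite cnt_S, IHN. unfold cond. rewrite Nat.add_1_r.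
  destruct (Z.eqb _ _) eqn:E; [|reflexivity].
  apply Z.eqb_eq in E. pose proof (s_succ_le N). lia.
Qed.

Lemma cnt_0 j N : cnt j 0 N = if Z.eqb 0 j then N else 0%nat.
Proof.
  induction N. simpl. destruct j; reflexivity.
  rewrite cnt_S, IHN. unfold cond. rewrite Nat.add_0_r, Z.sub_diag.
  destruct (Z.eqb 0 j); lia.
Qed.


Definition u (j : Z) (t N : nat) : R := INR (cnt j t N) / INR N.

Lemma evenodd (v : nat -> R) (l : R) :
  is_lim_seq (fun N => v (2*N)%nat) l ->
  (forall N, (1 <= N)%nat -> Rabs (v (2*N+1)%nat - v (2*N)%nat) <= / INR N) ->
  is_lim_seq v l.
Proof.
  intros H1 H2. apply is_lim_seq_spec in H1. apply is_lim_seq_spec. intros eps.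
  pose proof (cond_pos eps) as Hep. assert (He2 : 0 < eps/2) by lra.
  destruct (H1 (mkposreal _ He2)) as [N0 HN0].
  destruct (archimed (/ (eps/2))) as [Ha _].
  set (N1 := Z.to_nat (up (/ (eps/2)))).
  assert (HN1 : / (eps/2) < INR N1).
  { unfold N1. rewrite INR_IZR_INZ, Z2Nat.id; [lra|].
    apply le_IZR. pose proof (Rinv_0_lt_compat _ He2). change (IZR 0) with 0. lra. }
  exists (2*(N0 + N1) + 2)%nat. intros n Hn.
  destruct (Nat.Even_or_Odd n) as [[k Hk]|[k Hk]]; subst n.
  - specialize (HN0 k ltac:(lia)). cbn [pos] in HN0. lra.
  - specialize (HN0 k ltac:(lia)). cbn [pos] in HN0.
    specialize (H2 k ltac:(lia)).
    assert (INR N1 <= INR k) by (apply le_INR; lia).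
    assert (0 < INR N1) by (pose proof (Rinv_0_lt_compat _ He2); lra).
    assert (/ INR k <= / INR N1) by (apply Rinv_le_contravar; lra).
    assert (/ INR N1 < eps/2).
    { rewrite <- (Rinv_inv (eps/2)). apply Rinv_lt_contravar; [|lra].
      apply Rmult_lt_0_compat; [apply Rinv_0_lt_compat|]; lra. }
    replace (v (2*k+1)%nat - l) with ((v (2*k+1)%nat - v (2*k)%nat) + (v (2*k)%nat - l)) by ring.
    eapply Rle_lt_trans. apply Rabs_triang. lra.
Qed.

Lemma u_step j t N : (1 <= N)%nat ->
  Rabs (u j t (2*N+1)%nat - u j t (2*N)%nat) <= / INR N.
Proof.
  intros HN. unfold u. replace (2*N+1)%nat with (S (2*N)) by lia.
  rewrite cnt_S, plus_INR, S_INR.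
  pose proof (cnt_le j t (2*N)) as Hc. apply le_INR in Hc.
  assert (Hc0 : 0 <= INR (cnt j t (2*N))) by apply pos_INR.
  assert (He : 0 <= INR (cond j t (2*N)) <= 1).
  { unfold cond. destruct (Z.eqb _ _); simpl; lra. }
  assert (HN' : 1 <= INR N) by (apply (le_INR 1); lia).
  rewrite mult_INR in *. replace (INR 2) with 2 in * by (simpl; lra).
  set (c := INR (cnt j t (2 * N))) in *. set (e := INR (cond j t (2*N))) in *.
  set (n := INR N) in *.
  replace ((c + e) / (2 * n + 1) - c / (2 * n)) with (/n * ((2*n*e - c) / (2*(2*n+1)))) by (field; lra).
  assert (Hn0 : 0 < / n) by (apply Rinv_0_lt_compat; lra).
  rewrite Rabs_mult, (Rabs_right (/n)) by lra.
  rewrite <- (Rmult_1_r (/n)) at 2. apply Rmult_le_compat_l; [lra|].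
  set (q := (2*n*e - c) / (2*(2*n+1))).
  assert (Hq : q * (2*(2*n+1)) = 2*n*e - c) by (unfold q; field; lra).
  apply Rabs_le. split; nra.
Qed.

Lemma u_even j t N : (1 <= N)%nat -> u j (2*t) (2*N) = u j t N.
Proof.
  intros HN. unfold u. rewrite cnt_even, !mult_INR.
  assert (1 <= INR N) by (apply (le_INR 1); lia). simpl. field. lra.
Qed.

Lemma u_odd j t N : (1 <= N)%nat ->
  u j (2*t+1) (2*N) = / 2 * u (j-1) t N + / 2 * u (j+1) (t+1) N.
Proof.
  intros HN. unfold u. rewrite cnt_odd, plus_INR, !mult_INR.
  assert (1 <= INR N) by (apply (le_INR 1); lia). simpl. field. lra.
Qed.

Lemma u_0 j N : (1 <= N)%nat -> u j 0 N = if Z.eqb 0 j then 1 else 0.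
Proof.
  intros HN. unfold u. rewrite cnt_0.
  assert (1 <= INR N) by (apply (le_INR 1); lia).
  destruct (Z.eqb 0 j); simpl; field; lra.
Qed.

Definition limex (t : nat) := forall j, exists l : R, is_lim_seq (u j t) l.

Lemma limex_0 : limex 0.
Proof.
  intros j. exists (if Z.eqb 0 j then 1 else 0).
  apply is_lim_seq_ext_loc with (fun _ => if Z.eqb 0 j then 1 else 0).
  - exists 1%nat. intros n Hn. symmetry. apply u_0. lia.
  - apply is_lim_seq_const.
Qed.

Lemma limex_even t : limex t -> limex (2*t).
Proof.
  intros H j. destruct (H j) as [l Hl]. exists l. apply evenodd.
  - apply is_lim_seq_ext_loc with (u j t); [|exact Hl].
    exists 1%nat. intros n Hn. symmetry. apply u_even. lia.
  - intros; apply u_step; auto.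
Qed.

Lemma odd_lim t j (l1 l2 : R) :
  is_lim_seq (u (j-1) t) l1 -> is_lim_seq (u (j+1) (t+1)) l2 ->
  is_lim_seq (u j (2*t+1)) (/2 * l1 + /2 * l2).
Proof.
  intros H1 H2. apply evenodd.
  - apply is_lim_seq_ext_loc with (fun N => /2 * u (j-1) t N + /2 * u (j+1) (t+1) N).
    + exists 1%nat. intros n Hn. symmetry. apply u_odd. lia.
    + apply is_lim_seq_plus'; [exact (is_lim_seq_scal_l _ (/2) l1 H1) | exact (is_lim_seq_scal_l _ (/2) l2 H2)].
  - intros; apply u_step; auto.
Qed.

Lemma u_1_big j N : (2 <= j)%Z -> u j 1 N = 0.
Proof. intros Hj. unfold u. rewrite cnt_1_big by auto. simpl. lra. Qed.

Lemma limex_1 : limex 1.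
Proof.
  assert (Hbig : forall j, (2 <= j)%Z -> is_lim_seq (u j 1) 0).
  { intros j Hj. apply is_lim_seq_ext with (fun _ => 0).
    intros; symmetry; apply u_1_big; auto. apply is_lim_seq_const. }
  assert (Hk : forall k : nat, exists l : R, is_lim_seq (u (1 - Z.of_nat k) 1) l).
  { induction k.
    - exists (/2 * 1 + /2 * 0). replace (1 - Z.of_nat 0)%Z with (2*0+1)%Z by lia.
      apply (odd_lim 0 (2*0+1) 1 0).
      + apply is_lim_seq_ext_loc with (fun _ => 1).
        exists 1%nat. intros n Hn. rewrite u_0 by lia. reflexivity. apply is_lim_seq_const.
      + apply Hbig. lia.
    - destruct IHk as [l Hl].
      exists (/2 * (if Z.eqb 0 (1 - Z.of_nat (S k) - 1) then 1 else 0) + /2 * l).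
      apply (odd_lim 0 _ _ l).
      + apply is_lim_seq_ext_loc with (fun _ => if Z.eqb 0 (1 - Z.of_nat (S k) - 1) then 1 else 0).
        exists 1%nat. intros n Hn. rewrite u_0 by lia. reflexivity. apply is_lim_seq_const.
      + replace (1 - Z.of_nat (S k) + 1)%Z with (1 - Z.of_nat k)%Z by lia. exact Hl. }
  intros j. destruct (Z_le_gt_dec 2 j).
  - exists 0. apply Hbig; auto.
  - destruct (Hk (Z.to_nat (1 - j))) as [l Hl]. exists l.
    replace j with (1 - Z.of_nat (Z.to_nat (1 - j)))%Z by lia. exact Hl.
Qed.

Lemma limex_all t : limex t.
Proof.
  induction t as [t IH] using (well_founded_induction lt_wf).
  destruct (Nat.Even_or_Odd t) as [[m Hm]|[m Hm]]; subst t.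
  - destruct m. apply limex_0. apply limex_even, IH. lia.
  - destruct m. apply limex_1.
    intros j. destruct (IH (S m) ltac:(lia) (j-1)%Z) as [l1 H1].
    destruct (IH (S m + 1)%nat ltac:(lia) (j+1)%Z) as [l2 H2].
    eexists. apply odd_lim; eauto.
Qed.

Lemma delta_lim j t : is_lim_seq (u j t) (delta j t).
Proof.
  destruct (limex_all t j) as [l Hl].
  unfold delta. replace (Lim_seq _) with (Finite l). simpl. exact Hl.
  symmetry. apply is_lim_seq_unique. exact Hl.
Qed.

Lemma delta_eq j t (l : R) : is_lim_seq (u j t) l -> delta j t = l.
Proof.
  intros Hl. unfold delta. change (fun N => INR (cnt j t N) / INR N) with (u j t). rewrite (is_lim_seq_unique _ _ Hl). reflexivity.
Qed.

Lemma delta_even j t : delta j (2*t) = delta j t.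
Proof.
  apply delta_eq. apply evenodd.
  - apply is_lim_seq_ext_loc with (u j t); [|apply delta_lim].
    exists 1%nat. intros n Hn. symmetry. apply u_even. lia.
  - intros; apply u_step; auto.
Qed.

Lemma delta_odd j t : delta j (2*t+1) = /2 * delta (j-1) t + /2 * delta (j+1) (t+1).
Proof.
  apply delta_eq. apply odd_lim; apply delta_lim.
Qed.

Lemma delta_0 j : delta j 0 = if Z.eqb 0 j then 1 else 0.
Proof.
  apply delta_eq.
  apply is_lim_seq_ext_loc with (fun _ => if Z.eqb 0 j then 1 else 0).
  - exists 1%nat. intros n Hn. symmetry. apply u_0. lia.
  - apply is_lim_seq_const.
Qed.

Lemma delta_nonneg j t : 0 <= delta j t.
Proof.
  assert (H := is_lim_seq_le (fun _ => 0) (u j t) 0 (delta j t)).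
  apply H. intros n. unfold u. destruct n. simpl. rewrite Rdiv_0_r. lra.
  apply Rdiv_le_0_compat; [apply pos_INR| apply lt_0_INR; lia].
  apply is_lim_seq_const. apply delta_lim.
Qed.

Definition ind (b : bool) : R := if b then 1 else 0.

Lemma ind_sum (x : Z) K :
  sum_f_R0 (fun k => ind (Z.eqb x (Z.of_nat k)) + ind (Z.eqb x (- Z.of_nat (S k)))) K
  = ind ((- Z.of_nat (S K) <=? x)%Z && (x <=? Z.of_nat K)%Z).
Proof.
  induction K.
  - simpl. unfold ind.
    destruct (Z.eqb x 0) eqn:E1; destruct (Z.eqb x (-1)) eqn:E2;
    destruct (Z.leb (-1) x) eqn:E3; destruct (Z.leb x 0) eqn:E4; simpl;
    rewrite ?Z.eqb_eq, ?Z.eqb_neq, ?Z.leb_le, ?Z.leb_gt in *; try lra; lia.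
  - rewrite tech5, IHK. unfold ind.
    destruct (Z.eqb x (Z.of_nat (S K))) eqn:E1; destruct (Z.eqb x (- Z.of_nat (S (S K)))) eqn:E2;
    destruct (Z.leb (- Z.of_nat (S K)) x) eqn:E3; destruct (Z.leb x (Z.of_nat K)) eqn:E4;
    destruct (Z.leb (- Z.of_nat (S (S K))) x) eqn:E5; destruct (Z.leb x (Z.of_nat (S K))) eqn:E6;
    simpl;
    rewrite ?Z.eqb_eq, ?Z.eqb_neq, ?Z.leb_le, ?Z.leb_gt in *; try lra; lia.
Qed.

Lemma cnt_sum_le t K N :
  sum_f_R0 (fun k => INR (cnt (Z.of_nat k) t N) + INR (cnt (- Z.of_nat (S k)) t N)) K <= INR N.
Proof.
  induction N.
  - simpl. rewrite sum_eq_R0. lra. intros; simpl; lra.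
  - rewrite S_INR.
    replace (sum_f_R0 (fun k => INR (cnt (Z.of_nat k) t (S N)) + INR (cnt (- Z.of_nat (S k)) t (S N))) K)
      with (sum_f_R0 (fun k => INR (cnt (Z.of_nat k) t N) + INR (cnt (- Z.of_nat (S k)) t N)) K
            + sum_f_R0 (fun k => ind (Z.eqb (Z.of_nat (s (N + t)) - Z.of_nat (s N)) (Z.of_nat k))
                + ind (Z.eqb (Z.of_nat (s (N + t)) - Z.of_nat (s N)) (- Z.of_nat (S k)))) K).
    + rewrite ind_sum. unfold ind at 1. destruct (andb _ _); lra.
    + rewrite <- sum_plus. apply sum_eq. intros i _.
      rewrite !cnt_S, !plus_INR. unfold cond, ind.
      destruct (Z.eqb _ (Z.of_nat i)); destruct (Z.eqb _ (- Z.of_nat (S i))); simpl; ring.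
Qed.

Lemma delta_sum_le t K :
  sum_f_R0 (fun k => delta (Z.of_nat k) t + delta (- Z.of_nat (S k)) t) K <= 1.
Proof.
  assert (Hl : is_lim_seq (fun N => sum_f_R0 (fun k => u (Z.of_nat k) t N + u (- Z.of_nat (S k)) t N) K)
     (sum_f_R0 (fun k => delta (Z.of_nat k) t + delta (- Z.of_nat (S k)) t) K)).
  { induction K; simpl.
    - apply is_lim_seq_plus'; apply delta_lim.
    - apply is_lim_seq_plus'; [exact IHK|]. apply is_lim_seq_plus'; apply delta_lim. }
  assert (H : Rbar_le (sum_f_R0 (fun k => delta (Z.of_nat k) t + delta (- Z.of_nat (S k)) t) K) 1).
  2:{ exact H. }
  apply (is_lim_seq_le_loc (fun N => sum_f_R0 (fun k => u (Z.of_nat k) t N + u (- Z.of_nat (S k)) t N) K) (fun _ => 1) _ 1); [|exact Hl|apply is_lim_seq_const].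
  exists 1%nat. intros N HN.
  assert (HN' : 0 < INR N) by (apply lt_0_INR; lia).
  pose proof (cnt_sum_le t K N) as Hc.
  replace (sum_f_R0 (fun k => u (Z.of_nat k) t N + u (- Z.of_nat (S k)) t N) K)
    with (sum_f_R0 (fun k => INR (cnt (Z.of_nat k) t N) + INR (cnt (- Z.of_nat (S k)) t N)) K / INR N).
  - apply Rmult_le_reg_r with (INR N); [lra|]. unfold Rdiv. rewrite Rmult_assoc, Rinv_l by lra. lra.
  - unfold Rdiv. rewrite Rmult_comm, scal_sum. apply sum_eq. intros. unfold u. field. lra.
Qed.


Lemma ex_series_nonneg_bounded (a : nat -> R) (M : R) :
  (forall k, 0 <= a k) -> (forall K, sum_f_R0 a K <= M) -> ex_series a.
Proof.
  intros H0 HM.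
  destruct (ex_finite_lim_seq_incr (sum_n a) M) as [l Hl].
  - intros n. rewrite !sum_n_Reals. simpl. specialize (H0 (S n)). lra.
  - intros n. rewrite sum_n_Reals. apply HM.
  - exists l. exact Hl.
Qed.

Lemma delta_ex_pos t : ex_series (fun k => delta (Z.of_nat k) t).
Proof.
  apply ex_series_nonneg_bounded with 1.
  - intros; apply delta_nonneg.
  - intros K. eapply Rle_trans; [|apply (delta_sum_le t K)].
    apply sum_Rle. intros. pose proof (delta_nonneg (- Z.of_nat (S n)) t). lra.
Qed.

Lemma delta_ex_neg t : ex_series (fun k => delta (- Z.of_nat (S k)) t).
Proof.
  apply ex_series_nonneg_bounded with 1.
  - intros; apply delta_nonneg.
  - intros K. eapply Rle_trans; [|apply (delta_sum_le t K)].
    apply sum_Rle. intros. pose proof (delta_nonneg (Z.of_nat n) t). lra.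
Qed.

Definition summable (f : Z -> R) :=
  ex_series (fun k => f (Z.of_nat k)) /\ ex_series (fun k => f (- Z.of_nat (S k))%Z).

Lemma ex_series_bounded_by (a : nat -> R) (b : nat -> R) :
  (forall k, Rabs (a k) <= b k) -> ex_series b -> ex_series a.
Proof.
  intros H Hb. apply (ex_series_le a b); auto.
Qed.

Lemma summable_delta t (g : Z -> R) :
  (forall k, Rabs (g k) <= 1) -> summable (fun k => delta k t * g k).
Proof.
  intros Hg. split.
  - apply ex_series_bounded_by with (fun k => delta (Z.of_nat k) t); [|apply delta_ex_pos].
    intros k. rewrite Rabs_mult, (Rabs_right (delta _ t)) by (apply Rle_ge, delta_nonneg).
    pose proof (Hg (Z.of_nat k)). pose proof (delta_nonneg (Z.of_nat k) t).
    rewrite <- (Rmult_1_r (delta (Z.of_nat k) t)) at 2. apply Rmult_le_compat_l; lra.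
  - apply ex_series_bounded_by with (fun k => delta (- Z.of_nat (S k)) t); [|apply delta_ex_neg].
    intros k. rewrite Rabs_mult, (Rabs_right (delta _ t)) by (apply Rle_ge, delta_nonneg).
    pose proof (Hg (- Z.of_nat (S k))%Z). pose proof (delta_nonneg (- Z.of_nat (S k)) t).
    rewrite <- (Rmult_1_r (delta (- Z.of_nat (S k)) t)) at 2. apply Rmult_le_compat_l; lra.
Qed.

Lemma sumZ_ext f g : (forall k, f k = g k) -> sumZ f = sumZ g.
Proof.
  intros H. unfold sumZ. f_equal; apply Series_ext; auto.
Qed.

Lemma sumZ_plus f g : summable f -> summable g ->
  sumZ (fun k => f k + g k) = sumZ f + sumZ g.
Proof.
  intros [Hf1 Hf2] [Hg1 Hg2]. unfold sumZ.
  rewrite (Series_plus (fun k => f (Z.of_nat k))), (Series_plus (fun k => f (- Z.of_nat (S k))%Z)) by auto.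
  ring.
Qed.

Lemma sumZ_scal c f : sumZ (fun k => c * f k) = c * sumZ f.
Proof.
  unfold sumZ. rewrite !Series_scal_l. ring.
Qed.

Lemma summable_plus f g : summable f -> summable g -> summable (fun k => f k + g k).
Proof.
  intros [Hf1 Hf2] [Hg1 Hg2]. split; apply (ex_series_plus _ _ Hf1 Hg1) || apply (ex_series_plus _ _ Hf2 Hg2).
Qed.

Lemma summable_scal c f : summable f -> summable (fun k => c * f k).
Proof.
  intros [H1 H2]. split; [apply (ex_series_scal_l c _ H1) | apply (ex_series_scal_l c _ H2)].
Qed.

Lemma sumZ_shift f : summable f -> sumZ (fun k => f (k - 1)%Z) = sumZ f.
Proof.
  intros [H1 H2]. unfold sumZ.
  assert (E1 : ex_series (fun k => f (Z.of_nat k - 1)%Z)).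
  { apply ex_series_incr_1. eapply ex_series_ext; [|exact H1].
    intros n. cbv beta. f_equal. rewrite ?Nat2Z.inj_succ. lia. }
  rewrite (Series_incr_1 (fun k => f (Z.of_nat k - 1)%Z)) by auto.
  rewrite (Series_incr_1 (fun k => f (- Z.of_nat (S k))%Z)) by auto.
  rewrite (Series_ext (fun k => f (Z.of_nat (S k) - 1)%Z) (fun k => f (Z.of_nat k))) by (intros; f_equal; rewrite ?Nat2Z.inj_succ; lia).
  rewrite (Series_ext (fun k => f (- Z.of_nat (S k) - 1)%Z) (fun k => f (- Z.of_nat (S (S k))))%Z) by (intros; f_equal; rewrite ?Nat2Z.inj_succ; lia).
  replace (Z.of_nat 0 - 1)%Z with (- Z.of_nat 1)%Z by reflexivity. ring.
Qed.

Lemma summable_shift f : summable f -> summable (fun k => f (k - 1)%Z).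
Proof.
  intros [H1 H2]. split.
  - apply ex_series_incr_1. eapply ex_series_ext; [|exact H1].
    intros n. cbv beta. f_equal. rewrite ?Nat2Z.inj_succ. lia.
  - apply ex_series_incr_1 in H2. eapply ex_series_ext; [|exact H2].
    intros n. cbv beta. f_equal. rewrite ?Nat2Z.inj_succ. lia.
Qed.

Lemma summable_shift' f : summable f -> summable (fun k => f (k + 1)%Z).
Proof.
  intros [H1 H2]. split.
  - apply ex_series_incr_1 in H1. eapply ex_series_ext; [|exact H1].
    intros n. cbv beta. f_equal. rewrite ?Nat2Z.inj_succ. lia.
  - apply ex_series_incr_1. eapply ex_series_ext; [|exact H2].
    intros n. cbv beta. f_equal. rewrite ?Nat2Z.inj_succ. lia.
Qed.

Lemma sumZ_shift' f : summable f -> sumZ (fun k => f (k + 1)%Z) = sumZ f.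
Proof.
  intros H. rewrite <- (sumZ_shift (fun k => f (k + 1)%Z)) by (apply summable_shift'; auto).
  apply sumZ_ext. intros k. f_equal. lia.
Qed.

Lemma Rabs_cos_le x : Rabs (cos x) <= 1.
Proof. apply Rabs_le. apply COS_bound. Qed.
Lemma Rabs_sin_le x : Rabs (sin x) <= 1.
Proof. apply Rabs_le. apply SIN_bound. Qed.

Definition Rc t th := sumZ (fun k => delta k t * cos (2 * PI * IZR k * th)).
Definition Ic t th := sumZ (fun k => delta k t * sin (2 * PI * IZR k * th)).

Lemma charf_eq t th : charf t th = (Rc t th, Ic t th).
Proof. reflexivity. Qed.

Lemma summ_c t th : summable (fun k => delta k t * cos (2 * PI * IZR k * th)).
Proof. apply summable_delta. intros; apply Rabs_cos_le. Qed.
Lemma summ_s t th : summable (fun k => delta k t * sin (2 * PI * IZR k * th)).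
Proof. apply summable_delta. intros; apply Rabs_sin_le. Qed.

Lemma angle_p th k : 2 * PI * IZR (k + 1) * th = 2 * PI * IZR k * th + 2 * PI * th.
Proof. rewrite plus_IZR. simpl. ring. Qed.
Lemma angle_m th k : 2 * PI * IZR (k - 1) * th = 2 * PI * IZR k * th - 2 * PI * th.
Proof. rewrite minus_IZR. simpl. ring. Qed.

Lemma summable_ext f g : (forall k, f k = g k) -> summable f -> summable g.
Proof.
  intros H [H1 H2]. split; [eapply ex_series_ext; [|exact H1] | eapply ex_series_ext; [|exact H2]]; intros; apply H.
Qed.

Lemma comb t th a b :
  summable (fun k => a * (delta k t * cos (2 * PI * IZR k * th)) + b * (delta k t * sin (2 * PI * IZR k * th)))
  /\ sumZ (fun k => a * (delta k t * cos (2 * PI * IZR k * th)) + b * (delta k t * sin (2 * PI * IZR k * th)))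
     = a * Rc t th + b * Ic t th.
Proof.
  split.
  - apply summable_plus; apply summable_scal; [apply summ_c|apply summ_s].
  - rewrite sumZ_plus by (apply summable_scal; first [apply summ_c|apply summ_s]).
    rewrite !sumZ_scal. reflexivity.
Qed.

Lemma shift_gen t th a b (F : Z -> R) (e : Z) :
  (e = 1 \/ e = -1)%Z ->
  (forall k, F k = a * (delta (k - e) t * cos (2 * PI * IZR (k - e) * th)) + b * (delta (k - e) t * sin (2 * PI * IZR (k - e) * th))) ->
  summable F /\ sumZ F = a * Rc t th + b * Ic t th.
Proof.
  intros He HF. destruct (comb t th a b) as [Hs Hsum].
  destruct He as [-> | ->].
  - split.
    + eapply summable_ext; [|apply (summable_shift _ Hs)]. intros k. rewrite HF. reflexivity.
    + rewrite <- Hsum, <- (sumZ_shift _ Hs). apply sumZ_ext. intros k. rewrite HF. reflexivity.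
  - split.
    + eapply summable_ext; [|apply (summable_shift' _ Hs)]. intros k. rewrite HF.
      replace (k - -1)%Z with (k+1)%Z by lia. reflexivity.
    + rewrite <- Hsum, <- (sumZ_shift' _ Hs). apply sumZ_ext. intros k. rewrite HF.
      replace (k - -1)%Z with (k+1)%Z by lia. reflexivity.
Qed.

Lemma IZR_shift k e : IZR k = IZR (k - e) + IZR e.
Proof. rewrite minus_IZR. ring. Qed.

Lemma shiftm_cos t th :
  summable (fun k => delta (k - 1) t * cos (2 * PI * IZR k * th)) /\
  sumZ (fun k => delta (k - 1) t * cos (2 * PI * IZR k * th))
  = cos (2*PI*th) * Rc t th + (- sin (2*PI*th)) * Ic t th.
Proof.
  apply shift_gen with 1%Z; [lia|]. intros k.
  rewrite (IZR_shift k 1). replace (2 * PI * (IZR (k - 1) + IZR 1) * th) with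
    (2 * PI * IZR (k - 1) * th + 2 * PI * th) by (simpl; ring).
  rewrite cos_plus. ring.
Qed.

Lemma shiftm_sin t th :
  summable (fun k => delta (k - 1) t * sin (2 * PI * IZR k * th)) /\
  sumZ (fun k => delta (k - 1) t * sin (2 * PI * IZR k * th))
  = sin (2*PI*th) * Rc t th + cos (2*PI*th) * Ic t th.
Proof.
  apply shift_gen with 1%Z; [lia|]. intros k.
  rewrite (IZR_shift k 1). replace (2 * PI * (IZR (k - 1) + IZR 1) * th) with
    (2 * PI * IZR (k - 1) * th + 2 * PI * th) by (simpl; ring).
  rewrite sin_plus. ring.
Qed.

Lemma shiftp_cos t th :
  summable (fun k => delta (k + 1) t * cos (2 * PI * IZR k * th)) /\
  sumZ (fun k => delta (k + 1) t * cos (2 * PI * IZR k * th))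
  = cos (2*PI*th) * Rc t th + sin (2*PI*th) * Ic t th.
Proof.
  destruct (shift_gen t th (cos (2*PI*th)) (sin (2*PI*th))
     (fun k => delta (k + 1) t * cos (2 * PI * IZR k * th)) (-1)) as [H1 H2]; [lia| |split; assumption].
  intros k. replace (k - -1)%Z with (k+1)%Z by lia.
  rewrite (IZR_shift k (-1)). replace (k - -1)%Z with (k+1)%Z by lia.
  replace (2 * PI * (IZR (k + 1) + IZR (-1)) * th) with
    (2 * PI * IZR (k + 1) * th - 2 * PI * th) by (simpl; ring).
  rewrite cos_minus. ring.
Qed.

Lemma shiftp_sin t th :
  summable (fun k => delta (k + 1) t * sin (2 * PI * IZR k * th)) /\
  sumZ (fun k => delta (k + 1) t * sin (2 * PI * IZR k * th))
  = (- sin (2*PI*th)) * Rc t th + cos (2*PI*th) * Ic t th.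
Proof.
  destruct (shift_gen t th (- sin (2*PI*th)) (cos (2*PI*th))
     (fun k => delta (k + 1) t * sin (2 * PI * IZR k * th)) (-1)) as [H1 H2]; [lia| |split; assumption].
  intros k. replace (k - -1)%Z with (k+1)%Z by lia.
  rewrite (IZR_shift k (-1)). replace (k - -1)%Z with (k+1)%Z by lia.
  replace (2 * PI * (IZR (k + 1) + IZR (-1)) * th) with
    (2 * PI * IZR (k + 1) * th - 2 * PI * th) by (simpl; ring).
  rewrite sin_minus. ring.
Qed.

Lemma charf_even t th : charf (2*t) th = charf t th.
Proof.
  unfold charf. f_equal; apply sumZ_ext; intros k; rewrite delta_even; reflexivity.
Qed.

Lemma Rc_even t th : Rc (2*t) th = Rc t th.
Proof. unfold Rc. apply sumZ_ext; intros; rewrite delta_even; reflexivity. Qed.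
Lemma Ic_even t th : Ic (2*t) th = Ic t th.
Proof. unfold Ic. apply sumZ_ext; intros; rewrite delta_even; reflexivity. Qed.

Lemma Rc_odd t th :
  Rc (2*t+1) th = /2 * (cos (2*PI*th) * Rc t th - sin (2*PI*th) * Ic t th)
                + /2 * (cos (2*PI*th) * Rc (t+1) th + sin (2*PI*th) * Ic (t+1) th).
Proof.
  destruct (shiftm_cos t th) as [S1 E1]. destruct (shiftp_cos (t+1) th) as [S2 E2].
  unfold Rc at 1. rewrite (sumZ_ext _ (fun k => /2 * (delta (k - 1) t * cos (2 * PI * IZR k * th))
      + /2 * (delta (k + 1) (t+1) * cos (2 * PI * IZR k * th)))).
  - rewrite sumZ_plus by (apply summable_scal; assumption).
    rewrite !sumZ_scal, E1, E2. ring.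
  - intros k. rewrite delta_odd. ring.
Qed.

Lemma Ic_odd t th :
  Ic (2*t+1) th = /2 * (sin (2*PI*th) * Rc t th + cos (2*PI*th) * Ic t th)
                + /2 * (- sin (2*PI*th) * Rc (t+1) th + cos (2*PI*th) * Ic (t+1) th).
Proof.
  destruct (shiftm_sin t th) as [S1 E1]. destruct (shiftp_sin (t+1) th) as [S2 E2].
  unfold Ic at 1. rewrite (sumZ_ext _ (fun k => /2 * (delta (k - 1) t * sin (2 * PI * IZR k * th))
      + /2 * (delta (k + 1) (t+1) * sin (2 * PI * IZR k * th)))).
  - rewrite sumZ_plus by (apply summable_scal; assumption).
    rewrite !sumZ_scal, E1, E2. ring.
  - intros k. rewrite delta_odd. ring.
Qed.

Lemma Series_0 : Series (fun _ => 0) = 0.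
Proof. rewrite (Series_ext _ (fun n => 0 * 0)) by (intros; ring). rewrite Series_scal_l. ring. Qed.

Lemma ex_series_0 : ex_series (fun _ => 0).
Proof.
  apply (ex_series_le (K:=R_AbsRing) (V:=R_CompleteNormedModule) (fun _ => 0) (fun n => 0 ^ n)).
  - intros n. change (norm (zero : R_NormedModule) <= 0 ^ n). rewrite norm_zero. apply pow_le. lra.
  - apply ex_series_geom. rewrite Rabs_R0. lra.
Qed.

Lemma sumZ_single (f : Z -> R) : (forall k, k <> 0%Z -> f k = 0) -> sumZ f = f 0%Z.
Proof.
  intros H. unfold sumZ.
  rewrite (Series_ext (fun k => f (- Z.of_nat (S k))%Z) (fun _ => 0)) by (intros; apply H; lia).
  rewrite Series_0, Series_incr_1.
  - rewrite (Series_ext (fun k => f (Z.of_nat (S k))) (fun _ => 0)) by (intros; apply H; lia).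
    rewrite Series_0. simpl. ring.
  - apply ex_series_incr_1. apply (ex_series_ext (fun _ => 0)).
    + intros; symmetry; apply H; lia.
    + apply ex_series_0.
Qed.

Lemma Rc_0 th : Rc 0 th = 1.
Proof.
  unfold Rc. rewrite sumZ_single.
  - rewrite delta_0. simpl. rewrite Rmult_0_r, Rmult_0_l, cos_0. ring.
  - intros k Hk. rewrite delta_0. destruct (Z.eqb_spec 0 k); [lia|]. ring.
Qed.

Lemma Ic_0 th : Ic 0 th = 0.
Proof.
  unfold Ic. rewrite sumZ_single.
  - rewrite delta_0. simpl. rewrite Rmult_0_r, Rmult_0_l, sin_0. ring.
  - intros k Hk. rewrite delta_0. destruct (Z.eqb_spec 0 k); [lia|]. ring.
Qed.

Lemma Rc_at0 t : Rc t 0 = 1.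
Proof.
  induction t as [t IH] using (well_founded_induction lt_wf).
  destruct (Nat.Even_or_Odd t) as [[m Hm]|[m Hm]]; subst t.
  - destruct m. apply Rc_0.
    rewrite Rc_even. apply IH. lia.
  - destruct m.
    + assert (H := Rc_odd 0 0). rewrite Rmult_0_r, cos_0, sin_0, Rc_0 in H. simpl in H |- *. lra.
    + rewrite Rc_odd. rewrite Rmult_0_r, cos_0, sin_0. rewrite !IH by lia. lra.
Qed.


Record P6 : Type := mkP { cf0 : R; cf1 : R; cf2 : R; cf3 : R; cf4 : R; cf5 : R }.

Definition ev (p : P6) (y : R) : R :=
  cf0 p + cf1 p * y + cf2 p * y^2 + cf3 p * y^3 + cf4 p * y^4 + cf5 p * y^5.

Definition padd (p q : P6) : P6 :=
  mkP (cf0 p + cf0 q) (cf1 p + cf1 q) (cf2 p + cf2 q) (cf3 p + cf3 q) (cf4 p + cf4 q) (cf5 p + cf5 q).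
Definition pscal (a : R) (p : P6) : P6 :=
  mkP (a * cf0 p) (a * cf1 p) (a * cf2 p) (a * cf3 p) (a * cf4 p) (a * cf5 p).
Definition pconst (a : R) : P6 := mkP a 0 0 0 0 0.
Definition pid : P6 := mkP 0 1 0 0 0 0.
Definition pmul (p q : P6) : P6 :=
  let (p0, p1, p2, p3, p4, p5) := p in
  let (q0, q1, q2, q3, q4, q5) := q in
  mkP (p0*q0) (p0*q1 + p1*q0) (p0*q2 + p1*q1 + p2*q0)
      (p0*q3 + p1*q2 + p2*q1 + p3*q0)
      (p0*q4 + p1*q3 + p2*q2 + p3*q1 + p4*q0)
      (p0*q5 + p1*q4 + p2*q3 + p3*q2 + p4*q1 + p5*q0).
Definition phi (p q : P6) : P6 :=
  let (p0, p1, p2, p3, p4, p5) := p in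
  let (q0, q1, q2, q3, q4, q5) := q in
  mkP (p1*q5 + p2*q4 + p3*q3 + p4*q2 + p5*q1)
      (p2*q5 + p3*q4 + p4*q3 + p5*q2)
      (p3*q5 + p4*q4 + p5*q3)
      (p4*q5 + p5*q4)
      (p5*q5) 0.

Lemma ev_mul p q y : ev p y * ev q y = ev (pmul p q) y + y^6 * ev (phi p q) y.
Proof. destruct p, q. unfold ev, pmul, phi. simpl. ring. Qed.
Lemma ev_add p q y : ev (padd p q) y = ev p y + ev q y.
Proof. destruct p, q. unfold ev, padd. simpl. ring. Qed.
Lemma ev_scal a p y : ev (pscal a p) y = a * ev p y.
Proof. destruct p. unfold ev, pscal. simpl. ring. Qed.
Lemma ev_const a y : ev (pconst a) y = a.
Proof. unfold ev, pconst. simpl. ring. Qed.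
Lemma ev_id y : ev pid y = y.
Proof. unfold ev, pid. simpl. ring. Qed.

Definition bnd (p : P6) : R :=
  Rabs (cf0 p) + Rabs (cf1 p) + Rabs (cf2 p) + Rabs (cf3 p) + Rabs (cf4 p) + Rabs (cf5 p).

Lemma pow_abs_le1 y n : Rabs y <= 1 -> Rabs (y ^ n) <= 1.
Proof.
  intros H. rewrite <- RPow_abs. induction n. simpl; lra.
  simpl. pose proof (Rabs_pos y).
  replace 1 with (1 * 1) by ring. apply Rmult_le_compat; auto. apply pow_le; auto.
Qed.

Lemma term_le a y n : Rabs y <= 1 -> Rabs (a * y ^ n) <= Rabs a.
Proof.
  intros H. rewrite Rabs_mult. pose proof (pow_abs_le1 y n H). pose proof (Rabs_pos a).
  pose proof (Rabs_pos (y ^ n)). nra.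
Qed.

Lemma ev_bound p y : Rabs y <= 1 -> Rabs (ev p y) <= bnd p.
Proof.
  intros H. unfold ev, bnd.
  pose proof (term_le (cf1 p) y 1 H). pose proof (term_le (cf2 p) y 2 H).
  pose proof (term_le (cf3 p) y 3 H). pose proof (term_le (cf4 p) y 4 H).
  pose proof (term_le (cf5 p) y 5 H). rewrite pow_1 in *.
  set (a0 := cf0 p) in *. set (a1 := cf1 p * y) in *. set (a2 := cf2 p * y^2) in *.
  set (a3 := cf3 p * y^3) in *. set (a4 := cf4 p * y^4) in *. set (a5 := cf5 p * y^5) in *.
  pose proof (Rabs_triang (a0 + a1 + a2 + a3 + a4) a5).
  pose proof (Rabs_triang (a0 + a1 + a2 + a3) a4).
  pose proof (Rabs_triang (a0 + a1 + a2) a3).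
  pose proof (Rabs_triang (a0 + a1) a2).
  pose proof (Rabs_triang a0 a1). lra.
Qed.

Lemma bnd_pos p : 0 <= bnd p.
Proof.
  unfold bnd. pose proof (Rabs_pos (cf0 p)). pose proof (Rabs_pos (cf1 p)). pose proof (Rabs_pos (cf2 p)).
  pose proof (Rabs_pos (cf3 p)). pose proof (Rabs_pos (cf4 p)). pose proof (Rabs_pos (cf5 p)). lra.
Qed.

Definition approx (f : R -> R) (p : P6) : Prop :=
  exists d, 0 < d /\ exists M, forall y, Rabs y < d -> Rabs (f y - ev p y) <= M * Rabs y ^ 6.

Lemma w_facts y : Rabs y <= 1 -> 0 <= Rabs y ^ 6 <= 1.
Proof.
  intros H. split. apply pow_le, Rabs_pos. rewrite RPow_abs. apply pow_abs_le1; auto.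
Qed.

Lemma approx_O6 f g p :
  approx g p ->
  (exists d, 0 < d /\ exists M, forall y, Rabs y < d -> Rabs (f y - g y) <= M * Rabs y ^ 6) ->
  approx f p.
Proof.
  intros [d1 [Hd1 [M1 H1]]] [d2 [Hd2 [M2 H2]]].
  exists (Rmin d1 d2). split. apply Rmin_pos; auto. exists (M1 + M2). intros y Hy.
  assert (Hy1 : Rabs y < d1) by (eapply Rlt_le_trans; [exact Hy| apply Rmin_l]).
  assert (Hy2 : Rabs y < d2) by (eapply Rlt_le_trans; [exact Hy| apply Rmin_r]).
  specialize (H1 y Hy1). specialize (H2 y Hy2).
  replace (f y - ev p y) with ((f y - g y) + (g y - ev p y)) by ring.
  eapply Rle_trans. apply Rabs_triang. lra.
Qed.

Lemma approx_loc f g p :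
  approx g p -> (exists d, 0 < d /\ forall y, Rabs y < d -> f y = g y) -> approx f p.
Proof.
  intros Hg [d [Hd H]]. apply approx_O6 with g; auto.
  exists d. split; auto. exists 0. intros y Hy. rewrite H by auto.
  replace (g y - g y) with 0 by ring. rewrite Rabs_R0. lra.
Qed.

Lemma approx_plus f g p q : approx f p -> approx g q -> approx (fun y => f y + g y) (padd p q).
Proof.
  intros [d1 [Hd1 [M1 H1]]] [d2 [Hd2 [M2 H2]]].
  exists (Rmin d1 d2). split. apply Rmin_pos; auto. exists (M1 + M2). intros y Hy.
  assert (Hy1 : Rabs y < d1) by (eapply Rlt_le_trans; [exact Hy| apply Rmin_l]).
  assert (Hy2 : Rabs y < d2) by (eapply Rlt_le_trans; [exact Hy| apply Rmin_r]).
  specialize (H1 y Hy1). specialize (H2 y Hy2). rewrite ev_add.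
  replace (f y + g y - (ev p y + ev q y)) with ((f y - ev p y) + (g y - ev q y)) by ring.
  eapply Rle_trans. apply Rabs_triang. lra.
Qed.

Lemma approx_scal a f p : approx f p -> approx (fun y => a * f y) (pscal a p).
Proof.
  intros [d [Hd [M H]]]. exists d. split; auto. exists (Rabs a * M). intros y Hy.
  rewrite ev_scal. replace (a * f y - a * ev p y) with (a * (f y - ev p y)) by ring.
  rewrite Rabs_mult. rewrite Rmult_assoc. apply Rmult_le_compat_l. apply Rabs_pos. auto.
Qed.

Lemma approx_const a : approx (fun _ => a) (pconst a).
Proof.
  exists 1. split. lra. exists 0. intros y Hy. rewrite ev_const.
  replace (a - a) with 0 by ring. rewrite Rabs_R0. lra.
Qed.

Lemma approx_id : approx (fun y => y) pid.
Proof.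
  exists 1. split. lra. exists 0. intros y Hy. rewrite ev_id.
  replace (y - y) with 0 by ring. rewrite Rabs_R0. lra.
Qed.

Lemma mul_ineq (P Q H M1 M2 w e1 e2 E1 E2 eh : R) :
  0 <= w <= 1 -> Rabs e1 <= P -> Rabs e2 <= Q -> Rabs eh <= H ->
  Rabs E1 <= M1 * w -> Rabs E2 <= M2 * w ->
  Rabs (e1 * E2 + E1 * e2 + E1 * E2 + w * eh)
    <= (P * Rabs M2 + Rabs M1 * Q + Rabs M1 * Rabs M2 + H) * w.
Proof.
  intros Hw He1 He2 Hh HE1 HE2.
  assert (A1 : Rabs E1 <= Rabs M1 * w) by (eapply Rle_trans; [exact HE1|]; apply Rmult_le_compat_r; [lra|apply Rle_abs]).
  assert (A2 : Rabs E2 <= Rabs M2 * w) by (eapply Rle_trans; [exact HE2|]; apply Rmult_le_compat_r; [lra|apply Rle_abs]).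
  pose proof (Rabs_pos e1). pose proof (Rabs_pos e2). pose proof (Rabs_pos E1). pose proof (Rabs_pos E2).
  pose proof (Rabs_pos M1). pose proof (Rabs_pos M2). pose proof (Rabs_pos eh).
  pose proof (Rabs_triang (e1 * E2 + E1 * e2 + E1 * E2) (w * eh)).
  pose proof (Rabs_triang (e1 * E2 + E1 * e2) (E1 * E2)).
  pose proof (Rabs_triang (e1 * E2) (E1 * e2)).
  rewrite !Rabs_mult, (Rabs_right w) in * by lra.
  assert (B1 : Rabs e1 * Rabs E2 <= P * (Rabs M2 * w)) by (apply Rmult_le_compat; auto).
  assert (B2 : Rabs E1 * Rabs e2 <= (Rabs M1 * w) * Q) by (apply Rmult_le_compat; auto).
  assert (B3 : Rabs E1 * Rabs E2 <= (Rabs M1 * w) * (Rabs M2 * w)) by (apply Rmult_le_compat; auto).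
  assert (B3' : (Rabs M1 * w) * (Rabs M2 * w) <= Rabs M1 * Rabs M2 * w).
  { replace (Rabs M1 * w * (Rabs M2 * w)) with ((Rabs M1 * Rabs M2 * w) * w) by ring.
    rewrite <- (Rmult_1_r (Rabs M1 * Rabs M2 * w)) at 2. apply Rmult_le_compat_l; [|lra].
    apply Rmult_le_pos; [apply Rmult_le_pos|]; lra. }
  assert (B4 : w * Rabs eh <= w * H) by (apply Rmult_le_compat_l; lra).
  lra.
Qed.

Lemma approx_mul f g p q : approx f p -> approx g q -> approx (fun y => f y * g y) (pmul p q).
Proof.
  intros [d1 [Hd1 [M1 H1]]] [d2 [Hd2 [M2 H2]]].
  exists (Rmin 1 (Rmin d1 d2)). split. apply Rmin_pos; [lra|apply Rmin_pos; auto].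
  exists (bnd p * Rabs M2 + Rabs M1 * bnd q + Rabs M1 * Rabs M2 + bnd (phi p q)).
  intros y Hy.
  assert (Hy0 : Rabs y <= 1) by (left; eapply Rlt_le_trans; [exact Hy| apply Rmin_l]).
  assert (Hy' : Rabs y < Rmin d1 d2) by (eapply Rlt_le_trans; [exact Hy| apply Rmin_r]).
  assert (Hy1 : Rabs y < d1) by (eapply Rlt_le_trans; [exact Hy'| apply Rmin_l]).
  assert (Hy2 : Rabs y < d2) by (eapply Rlt_le_trans; [exact Hy'| apply Rmin_r]).
  specialize (H1 y Hy1). specialize (H2 y Hy2).
  assert (E : f y * g y - ev (pmul p q) y =
     ev p y * (g y - ev q y) + (f y - ev p y) * ev q y + (f y - ev p y) * (g y - ev q y)
     + Rabs y ^ 6 * ev (phi p q) y).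
  { rewrite RPow_abs, Rabs_right by (apply Rle_ge; replace 6%nat with (2*3)%nat by reflexivity;
      rewrite pow_sqr; apply pow_le; apply Rle_0_sqr).
    pose proof (ev_mul p q y). lra. }
  rewrite E. apply mul_ineq; auto using ev_bound, w_facts.
Qed.

Fixpoint ppow (p : P6) (k : nat) : P6 :=
  match k with O => pconst 1 | S k => pmul p (ppow p k) end.

Lemma approx_pow f p k : approx f p -> approx (fun y => f y ^ k) (ppow p k).
Proof.
  intros H. induction k.
  { apply approx_loc with (fun _ => 1). apply approx_const. exists 1. split. lra. intros; reflexivity. }
  simpl. apply (approx_mul f (fun y => f y ^ k)); auto.
Qed.

Lemma small_zero a d C : 0 < d -> (forall y, 0 < y < d -> Rabs a <= C * y) -> a = 0.
Proof.
  intros Hd H. destruct (Req_dec a 0) as [|Ha]; auto. exfalso.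
  assert (Hpa : 0 < Rabs a) by (apply Rabs_pos_lt; auto).
  set (y := Rmin (d/2) (Rabs a / (2 * (Rabs C + 1)))).
  assert (HC : 0 < Rabs C + 1) by (pose proof (Rabs_pos C); lra).
  assert (Hy0 : 0 < y) by (apply Rmin_pos; [lra| apply Rdiv_lt_0_compat; lra]).
  assert (Hyd : y < d) by (eapply Rle_lt_trans; [apply Rmin_l| lra]).
  assert (Hya : y <= Rabs a / (2 * (Rabs C + 1))) by apply Rmin_r.
  specialize (H y (conj Hy0 Hyd)).
  assert (C * y <= Rabs C * y) by (apply Rmult_le_compat_r; [lra|apply Rle_abs]).
  assert (Rabs C * y <= (Rabs C + 1) * y) by (apply Rmult_le_compat_r; lra).
  assert ((Rabs C + 1) * y <= (Rabs C + 1) * (Rabs a / (2 * (Rabs C + 1)))) by (apply Rmult_le_compat_l; lra).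
  replace ((Rabs C + 1) * (Rabs a / (2 * (Rabs C + 1)))) with (Rabs a / 2) in * by (field; lra).
  lra.
Qed.

Definition pshift (p : P6) : P6 := mkP (cf1 p) (cf2 p) (cf3 p) (cf4 p) (cf5 p) 0.

Lemma ev_shift p y : ev p y = cf0 p + y * ev (pshift p) y.
Proof. destruct p. unfold ev, pshift. simpl. ring. Qed.

Lemma zero_step p M k d : 0 < d ->
  (forall y, 0 < Rabs y < d -> Rabs (ev p y) <= M * Rabs y ^ (S k)) ->
  cf0 p = 0 /\ (forall y, 0 < Rabs y < d -> Rabs (ev (pshift p) y) <= M * Rabs y ^ k).
Proof.
  intros Hd H.
  assert (Hc : cf0 p = 0).
  { apply (small_zero _ (Rmin d 1) (Rabs M + bnd (pshift p))). apply Rmin_pos; lra.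
    intros y [Hy0 Hy1].
    assert (Hyd : y < d) by (eapply Rlt_le_trans; [exact Hy1|apply Rmin_l]).
    assert (Hy2 : y < 1) by (eapply Rlt_le_trans; [exact Hy1|apply Rmin_r]).
    assert (Ha : Rabs y = y) by (apply Rabs_right; lra).
    specialize (H y ltac:(rewrite Ha; lra)). rewrite Ha in H.
    pose proof (ev_bound (pshift p) y ltac:(rewrite Ha; lra)).
    assert (Hp : y ^ S k <= y).
    { assert (Hk : y ^ k <= 1).
      { rewrite <- (Rabs_right (y ^ k)) by (apply Rle_ge, pow_le; lra).
        apply pow_abs_le1. rewrite Ha. lra. }
      change (y ^ S k) with (y * y ^ k). nra. }
    assert (M * y ^ S k <= Rabs M * y).
    { eapply Rle_trans. apply Rmult_le_compat_r. apply pow_le; lra. apply Rle_abs.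
      apply Rmult_le_compat_l. apply Rabs_pos. auto. }
    rewrite ev_shift in H.
    replace (cf0 p) with ((cf0 p + y * ev (pshift p) y) - y * ev (pshift p) y) by ring.
    eapply Rle_trans. apply Rabs_triang. rewrite Rabs_Ropp, Rabs_mult, Ha.
    assert (y * Rabs (ev (pshift p) y) <= y * bnd (pshift p)) by (apply Rmult_le_compat_l; lra).
    lra. }
  split; auto. intros y Hy. specialize (H y Hy). rewrite ev_shift, Hc, Rplus_0_l, Rabs_mult in H.
  simpl in H. apply Rmult_le_reg_l with (Rabs y). lra. lra.
Qed.

Lemma poly_zero p M d : 0 < d ->
  (forall y, Rabs y < d -> Rabs (ev p y) <= M * Rabs y ^ 6) ->
  cf0 p = 0 /\ cf1 p = 0 /\ cf2 p = 0 /\ cf3 p = 0 /\ cf4 p = 0 /\ cf5 p = 0.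
Proof.
  intros Hd H.
  assert (H' : forall y, 0 < Rabs y < d -> Rabs (ev p y) <= M * Rabs y ^ 6) by (intros; apply H; lra).
  destruct (zero_step p M 5 d Hd H') as [E0 H1].
  destruct (zero_step _ M 4 d Hd H1) as [E1 H2].
  destruct (zero_step _ M 3 d Hd H2) as [E2 H3].
  destruct (zero_step _ M 2 d Hd H3) as [E3 H4].
  destruct (zero_step _ M 1 d Hd H4) as [E4 H5].
  destruct (zero_step _ M 0 d Hd H5) as [E5 H6].
  destruct p; simpl in *. repeat split; auto.
Qed.

Definition psub p q := padd p (pscal (-1) q).

Lemma approx_unique f p q : approx f p -> approx f q ->
  cf0 p = cf0 q /\ cf1 p = cf1 q /\ cf2 p = cf2 q /\ cf3 p = cf3 q /\ cf4 p = cf4 q /\ cf5 p = cf5 q.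
Proof.
  intros [d1 [Hd1 [M1 H1]]] [d2 [Hd2 [M2 H2]]].
  assert (Z := poly_zero (psub p q) (M1 + M2) (Rmin d1 d2) ltac:(apply Rmin_pos; auto)).
  destruct Z as [Z0 [Z1 [Z2 [Z3 [Z4 Z5]]]]].
  - intros y Hy.
    assert (Hy1 : Rabs y < d1) by (eapply Rlt_le_trans; [exact Hy| apply Rmin_l]).
    assert (Hy2 : Rabs y < d2) by (eapply Rlt_le_trans; [exact Hy| apply Rmin_r]).
    specialize (H1 y Hy1). specialize (H2 y Hy2). unfold psub. rewrite ev_add, ev_scal.
    replace (ev p y + -1 * ev q y) with (- (f y - ev p y) + (f y - ev q y)) by ring.
    eapply Rle_trans. apply Rabs_triang. rewrite Rabs_Ropp. lra.
  - destruct p, q; unfold psub, padd, pscal in *; simpl in *. repeat split; lra.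
Qed.


Definition pcomp (e p : P6) : P6 :=
  padd (pscal (cf0 e) (ppow p 0)) (padd (pscal (cf1 e) (ppow p 1)) (padd (pscal (cf2 e) (ppow p 2))
  (padd (pscal (cf3 e) (ppow p 3)) (padd (pscal (cf4 e) (ppow p 4)) (pscal (cf5 e) (ppow p 5)))))).

Lemma approx_small f p : approx f p -> cf0 p = 0 ->
  exists d, 0 < d /\ exists K, 0 <= K /\ forall y, Rabs y < d -> Rabs (f y) <= K * Rabs y.
Proof.
  intros [d [Hd [M H]]] Hc. exists (Rmin d 1). split. apply Rmin_pos; lra.
  exists (Rabs M + bnd (pshift p)). split. pose proof (Rabs_pos M). pose proof (bnd_pos (pshift p)). lra.
  intros y Hy.
  assert (Hy1 : Rabs y < d) by (eapply Rlt_le_trans; [exact Hy| apply Rmin_l]).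
  assert (Hy2 : Rabs y <= 1) by (left; eapply Rlt_le_trans; [exact Hy| apply Rmin_r]).
  specialize (H y Hy1).
  pose proof (ev_bound (pshift p) y Hy2).
  rewrite ev_shift, Hc, Rplus_0_l in H.
  replace (f y) with ((f y - y * ev (pshift p) y) + y * ev (pshift p) y) by ring.
  eapply Rle_trans. apply Rabs_triang. rewrite Rabs_mult.
  pose proof (Rabs_pos y).
  assert (Rabs y ^ 6 <= Rabs y).
  { change (Rabs y ^ 6) with (Rabs y * Rabs y ^ 5).
    assert (Rabs y ^ 5 <= 1) by (rewrite RPow_abs; apply pow_abs_le1; auto). nra. }
  assert (M * Rabs y ^ 6 <= Rabs M * Rabs y).
  { eapply Rle_trans. apply Rmult_le_compat_r. apply pow_le; lra. apply Rle_abs.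
    apply Rmult_le_compat_l. apply Rabs_pos. auto. }
  assert (Rabs y * Rabs (ev (pshift p) y) <= Rabs y * bnd (pshift p)) by (apply Rmult_le_compat_l; lra).
  lra.
Qed.

Lemma approx_comp g e f p : approx g e -> approx f p -> cf0 p = 0 ->
  approx (fun y => g (f y)) (pcomp e p).
Proof.
  intros Hg Hf Hc.
  assert (H1 : approx (fun y => ev e (f y)) (pcomp e p)).
  { unfold pcomp.
    apply approx_loc with (fun y => cf0 e * f y ^ 0 + (cf1 e * f y ^ 1 + (cf2 e * f y ^ 2 +
       (cf3 e * f y ^ 3 + (cf4 e * f y ^ 4 + cf5 e * f y ^ 5))))).
    - repeat apply approx_plus; apply approx_scal; apply approx_pow; auto.
    - exists 1. split. lra. intros y _. unfold ev. ring. }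
  apply approx_O6 with (fun y => ev e (f y)); auto.
  destruct (approx_small f p Hf Hc) as [d1 [Hd1 [K [HK Hs]]]].
  destruct Hg as [de [Hde [Me Hge]]].
  exists (Rmin d1 (de / (K + 1))). split. apply Rmin_pos; auto. apply Rdiv_lt_0_compat; lra.
  exists (Rabs Me * K ^ 6). intros y Hy.
  assert (Hy1 : Rabs y < d1) by (eapply Rlt_le_trans; [exact Hy| apply Rmin_l]).
  assert (Hy2 : Rabs y < de / (K + 1)) by (eapply Rlt_le_trans; [exact Hy| apply Rmin_r]).
  specialize (Hs y Hy1).
  assert (Hfy : Rabs (f y) < de).
  { eapply Rle_lt_trans. exact Hs.
    apply Rle_lt_trans with ((K+1) * Rabs y). pose proof (Rabs_pos y). nra.
    apply Rmult_lt_reg_l with (/ (K+1)). apply Rinv_0_lt_compat; lra.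
    rewrite <- Rmult_assoc, Rinv_l, Rmult_1_l by lra. unfold Rdiv in Hy2. lra. }
  specialize (Hge (f y) Hfy).
  eapply Rle_trans. exact Hge.
  assert (Rabs (f y) ^ 6 <= (K * Rabs y) ^ 6) by (apply pow_incr; split; [apply Rabs_pos|auto]).
  rewrite Rpow_mult_distr in H.
  eapply Rle_trans. apply Rmult_le_compat_r. apply pow_le, Rabs_pos. apply Rle_abs.
  rewrite Rmult_assoc. apply Rmult_le_compat_l. apply Rabs_pos. auto.
Qed.

Lemma CV_radius_decr_n a n : CV_radius (PS_decr_n a n) = CV_radius a.
Proof.
  induction n.
  - apply CV_radius_ext. intros k. reflexivity.
  - rewrite <- IHn, <- (CV_radius_decr_1 (PS_decr_n a n)). apply CV_radius_ext.
    intros k. unfold PS_decr_n, PS_decr_1. f_equal. lia.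
Qed.

Lemma radius_pos_ball a : Rbar_lt 0 (CV_radius a) ->
  exists d, 0 < d /\ forall y, Rabs y < d -> Rbar_lt (Rabs y) (CV_radius a).
Proof.
  destruct (CV_radius a) as [r| |] eqn:E; simpl; intros H.
  - exists r. split; auto.
  - exists 1. split. lra. intros; exact I.
  - contradiction.
Qed.

Lemma cont_bounded f : continuity_pt f 0 ->
  exists d, 0 < d /\ exists B, forall y, Rabs y < d -> Rabs (f y) <= B.
Proof.
  intros H. unfold continuity_pt, continue_in, limit1_in, limit_in in H.
  destruct (H 1 Rlt_0_1) as [alp [Halp H']]. exists alp. split; auto.
  exists (Rabs (f 0) + 1). intros y Hy.
  destruct (Req_dec y 0) as [->|Hne]. lra.
  specialize (H' y). simpl in H'. unfold R_dist, D_x, no_cond in H'.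
  rewrite Rminus_0_r in H'. specialize (H' (conj (conj I (not_eq_sym Hne)) Hy)).
  replace (f y) with (f 0 + (f y - f 0)) by ring.
  eapply Rle_trans. apply Rabs_triang. lra.
Qed.

Lemma approx_PSeries a : Rbar_lt 0 (CV_radius a) ->
  approx (PSeries a) (mkP (a 0%nat) (a 1%nat) (a 2%nat) (a 3%nat) (a 4%nat) (a 5%nat)).
Proof.
  intros Ha. destruct (radius_pos_ball a Ha) as [d1 [Hd1 Hb1]].
  assert (Ha6 : Rbar_lt 0 (CV_radius (PS_decr_n a 6))) by (rewrite CV_radius_decr_n; auto).
  assert (Hc : continuity_pt (PSeries (PS_decr_n a 6)) 0).
  { apply PSeries_continuity. rewrite Rabs_R0. auto. }
  destruct (cont_bounded _ Hc) as [d2 [Hd2 [B HB]]].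
  exists (Rmin d1 d2). split. apply Rmin_pos; auto. exists B. intros y Hy.
  assert (Hy1 : Rabs y < d1) by (eapply Rlt_le_trans; [exact Hy| apply Rmin_l]).
  assert (Hy2 : Rabs y < d2) by (eapply Rlt_le_trans; [exact Hy| apply Rmin_r]).
  rewrite (PSeries_decr_n a 5 y) by (apply CV_radius_inside; auto).
  replace (sum_f_R0 (fun k => a k * y ^ k) 5 + y ^ 6 * PSeries (PS_decr_n a 6) y -
     ev (mkP (a 0%nat) (a 1%nat) (a 2%nat) (a 3%nat) (a 4%nat) (a 5%nat)) y)
    with (y ^ 6 * PSeries (PS_decr_n a 6) y) by (unfold ev; simpl; ring).
  rewrite Rabs_mult, <- RPow_abs, Rmult_comm. apply Rmult_le_compat_r.
  apply pow_le, Rabs_pos. apply HB; auto.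
Qed.

Lemma radius_of_bounded a r M : (forall n, Rabs (a n * r ^ n) <= M) -> Rbar_le r (CV_radius a).
Proof.
  intros H. destruct (CV_radius_bounded a) as [Hub _]. apply Hub. exists M. auto.
Qed.

Lemma fact_ge1 n : 1 <= INR (Factorial.fact n).
Proof. apply (le_INR 1). pose proof (Factorial.lt_O_fact n). lia. Qed.

Lemma approx_eq f p q : approx f p -> p = q -> approx f q.
Proof. intros H ->; auto. Qed.

Definition pexp := mkP 1 1 (/2) (/6) (/24) (/120).
Definition pcos := mkP 1 0 (-/2) 0 (/24) 0.
Definition psin := mkP 0 1 0 (-/6) 0 (/120).

Lemma approx_exp : approx exp pexp.
Proof.
  apply approx_loc with (PSeries (fun n => / INR (Factorial.fact n))).
  2:{ exists 1. split. lra. intros; apply exp_Reals. }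
  eapply approx_eq. apply approx_PSeries.
  - eapply Rbar_lt_le_trans; [|apply (radius_of_bounded _ 1 1)]. simpl; lra.
    intros n. rewrite pow1, Rmult_1_r, Rabs_right.
    + pose proof (fact_ge1 n). rewrite <- Rinv_1. apply Rinv_le_contravar; lra.
    + apply Rle_ge, Rlt_le, Rinv_0_lt_compat. pose proof (fact_ge1 n). lra.
  - unfold pexp. simpl. f_equal; field.
Qed.

Lemma sum0 f : sum_f_R0 f 0 = f 0%nat.
Proof. reflexivity. Qed.

Lemma div_le_self a f : 0 <= a -> 1 <= f -> 0 <= a / f <= a.
Proof.
  intros Ha Hf. split. apply Rdiv_le_0_compat; lra.
  apply Rmult_le_reg_r with f. lra. unfold Rdiv. rewrite Rmult_assoc, Rinv_l by lra. nra.
Qed.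

Lemma pow6_abs y : Rabs y ^ 6 = y ^ 6.
Proof. rewrite RPow_abs. apply Rabs_right. replace (y^6) with ((y^3)^2) by ring. apply Rle_ge, pow2_ge_0. Qed.

Lemma approx_cos : approx cos pcos.
Proof.
  exists 1. split. lra. exists 1. intros y Hy.
  pose proof PI2_1. apply Rabs_lt_between in Hy.
  destruct (cos_bound y 1 ltac:(lra) ltac:(lra)) as [L U].
  change (2*1+1)%nat with 3%nat in L. change (2*(1+1))%nat with 4%nat in U.
  unfold cos_approx in L, U. rewrite !tech5 in L. rewrite !tech5 in U. rewrite sum0 in L. rewrite sum0 in U. unfold cos_term in L, U.
  assert (E0 : INR (Factorial.fact (2*0)) = 1) by (simpl; lra). rewrite E0 in L, U.
  assert (E2 : INR (Factorial.fact (2*1)) = 2) by (simpl; lra).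
  assert (E4 : INR (Factorial.fact (2*2)) = 24) by (simpl; lra).
  rewrite E2, E4 in L, U.
  set (f6 := INR (Factorial.fact (2*3))) in L, U. set (f8 := INR (Factorial.fact (2*4))) in U.
  assert (F6 : 1 <= f6) by apply fact_ge1. assert (F8 : 1 <= f8) by apply fact_ge1.
  change (y ^ (2*3)) with (y^6) in L, U. change (y ^ (2*4)) with (y^8) in U.
  change (y ^ (2*1)) with (y^2) in L, U. change (y ^ (2*2)) with (y^4) in L, U.
  change (y ^ (2*0)) with (y^0) in L, U.
  assert (L' : 1 - y^2/2 + y^4/24 - y^6/f6 <= cos y) by (eapply Rle_trans; [|exact L]; right; field; lra).
  assert (U' : cos y <= 1 - y^2/2 + y^4/24 - y^6/f6 + y^8/f8) by (eapply Rle_trans; [exact U|]; right; field; lra).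
  assert (Y6 : 0 <= y^6) by (replace (y^6) with ((y^3)^2) by ring; apply pow2_ge_0).
  assert (Y8 : y^8 <= y^6).
  { replace (y^8) with (y^6 * y^2) by ring. assert (y^2 <= 1) by nra. nra. }
  assert (Y8' : 0 <= y^8) by (replace (y^8) with ((y^4)^2) by ring; apply pow2_ge_0).
  destruct (div_le_self (y^6) f6 Y6 F6). destruct (div_le_self (y^8) f8 Y8' F8).
  rewrite pow6_abs.
  replace (ev pcos y) with (1 - y^2/2 + y^4/24) by (unfold ev, pcos; simpl cf0; simpl cf1; simpl cf2; simpl cf3; simpl cf4; simpl cf5; field).
  apply Rabs_le. split; lra.
Qed.

Lemma sin_pos_bound a : 0 <= a < 1 ->
  Rabs (sin a - ev psin a) <= a ^ 6.
Proof.
  intros Ha. pose proof PI2_1.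
  destruct (sin_bound a 1 ltac:(lra) ltac:(lra)) as [L U].
  change (2*1+1)%nat with 3%nat in L. change (2*(1+1))%nat with 4%nat in U.
  unfold sin_approx in L, U. rewrite !tech5 in L. rewrite !tech5 in U. rewrite sum0 in L. rewrite sum0 in U. unfold sin_term in L, U.
  assert (E1 : INR (Factorial.fact (2*0+1)) = 1) by (simpl; lra).
  assert (E3 : INR (Factorial.fact (2*1+1)) = 6) by (simpl; lra).
  assert (E5 : INR (Factorial.fact (2*2+1)) = 120) by (simpl; lra).
  rewrite E1, E3, E5 in L, U.
  set (f7 := INR (Factorial.fact (2*3+1))) in L, U. set (f9 := INR (Factorial.fact (2*4+1))) in U.
  assert (F7 : 1 <= f7) by apply fact_ge1. assert (F9 : 1 <= f9) by apply fact_ge1.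
  change (a ^ (2*3+1)) with (a^7) in L, U. change (a ^ (2*4+1)) with (a^9) in U.
  change (a ^ (2*0+1)) with (a^1) in L, U.
  change (a ^ (2*1+1)) with (a^3) in L, U. change (a ^ (2*2+1)) with (a^5) in L, U.
  assert (L' : a - a^3/6 + a^5/120 - a^7/f7 <= sin a) by (eapply Rle_trans; [|exact L]; right; field; lra).
  assert (U' : sin a <= a - a^3/6 + a^5/120 - a^7/f7 + a^9/f9) by (eapply Rle_trans; [exact U|]; right; field; lra).
  assert (Y6 : 0 <= a^6) by (apply pow_le; lra).
  assert (Y7 : 0 <= a^7) by (apply pow_le; lra).
  assert (Y9 : 0 <= a^9) by (apply pow_le; lra).
  assert (Y7' : a^7 <= a^6) by (replace (a^7) with (a^6 * a) by ring; nra).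
  assert (Y9' : a^9 <= a^6) by (replace (a^9) with (a^6 * (a^2 * a)) by ring; assert (a^2*a <= 1) by nra; nra).
  destruct (div_le_self (a^7) f7 Y7 F7). destruct (div_le_self (a^9) f9 Y9 F9).
  replace (ev psin a) with (a - a^3/6 + a^5/120) by (unfold ev, psin; simpl cf0; simpl cf1; simpl cf2; simpl cf3; simpl cf4; simpl cf5; field).
  apply Rabs_le. split; lra.
Qed.

Lemma approx_sin : approx sin psin.
Proof.
  exists 1. split. lra. exists 1. intros y Hy. rewrite Rmult_1_l, pow6_abs.
  destruct (Rle_lt_dec 0 y) as [Hp|Hn].
  - apply sin_pos_bound. apply Rabs_lt_between in Hy. lra.
  - assert (H := sin_pos_bound (-y) ltac:(apply Rabs_lt_between in Hy; lra)).
    rewrite sin_neg in H.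
    replace (- sin y - ev psin (- y)) with (- (sin y - ev psin y)) in H
      by (unfold ev, psin; simpl; ring).
    rewrite Rabs_Ropp in H. replace ((-y)^6) with (y^6) in H by ring. exact H.
Qed.


Fixpoint ri (j : nat) : R * R :=
  match j with O => (1, 0) | S j => (- snd (ri j), fst (ri j)) end.

Lemma pow_n_iy (y : R) j :
  pow_n (K := C_Ring) ((0%R, y) : C) j = ((fst (ri j) * y ^ j)%R, (snd (ri j) * y ^ j)%R).
Proof.
  induction j.
  - simpl. rewrite Rmult_1_l, Rmult_0_l. reflexivity.
  - change (pow_n (K := C_Ring) ((0%R, y) : C) (S j)) with (Cmult (0%R, y) (pow_n (K := C_Ring) ((0%R, y) : C) j)).
    rewrite IHj. unfold Cmult. simpl. f_equal; ring.
Qed.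

Lemma sum_n_fst (a : nat -> C) n : fst (sum_n (G := C_NormedModule) a n) = sum_n (fun k => fst (a k)) n.
Proof.
  induction n.
  - rewrite !sum_O. reflexivity.
  - rewrite !sum_Sn. change (fst (sum_n (G := C_NormedModule) a n) + fst (a (S n)) = plus (sum_n (fun k => fst (a k)) n) (fst (a (S n)))).
    rewrite IHn. reflexivity.
Qed.

Lemma sum_n_snd (a : nat -> C) n : snd (sum_n (G := C_NormedModule) a n) = sum_n (fun k => snd (a k)) n.
Proof.
  induction n.
  - rewrite !sum_O. reflexivity.
  - rewrite !sum_Sn. change (snd (sum_n (G := C_NormedModule) a n) + snd (a (S n)) = plus (sum_n (fun k => snd (a k)) n) (snd (a (S n)))).
    rewrite IHn. reflexivity.
Qed.

Lemma is_series_fst (a : nat -> C) (l : C) :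
  is_series (K := C_AbsRing) (V := C_NormedModule) a l -> is_series (fun n => fst (a n)) (fst l).
Proof.
  intros H P [eps HP]. unfold is_series, filterlim, filter_le, filtermap in H.
  assert (Hl : locally (T := C_NormedModule) l (fun z : C => P (fst z))).
  { exists eps. intros z Hz. apply HP. destruct Hz as [Hz1 Hz2]. exact Hz1. }
  destruct (H _ Hl) as [N HN]. exists N. intros n Hn. specialize (HN n Hn).
  rewrite <- sum_n_fst. exact HN.
Qed.

Lemma is_series_snd (a : nat -> C) (l : C) :
  is_series (K := C_AbsRing) (V := C_NormedModule) a l -> is_series (fun n => snd (a n)) (snd l).
Proof.
  intros H P [eps HP]. unfold is_series, filterlim, filter_le, filtermap in H.
  assert (Hl : locally (T := C_NormedModule) l (fun z : C => P (snd z))).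
  { exists eps. intros z Hz. apply HP. destruct Hz as [Hz1 Hz2]. exact Hz2. }
  destruct (H _ Hl) as [N HN]. exists N. intros n Hn. specialize (HN n Hn).
  rewrite <- sum_n_snd. exact HN.
Qed.

Definition alpha (k : nat -> R) j := k j / INR (Factorial.fact j) * fst (ri j).
Definition beta (k : nat -> R) j := k j / INR (Factorial.fact j) * snd (ri j).
Definition RcY t y := Rc t (y / (2*PI)).
Definition IcY t y := Ic t (y / (2*PI)).

Lemma PI_pos' : 0 < PI.
Proof. exact PI_RGT_0. Qed.

Lemma term_fst k (y : R) j :
  fst (Cmult (RtoC (k j / INR (Factorial.fact j))) (pow_n (K := C_Ring) ((0%R, y) : C) j)) = alpha k j * y ^ j.
Proof. rewrite pow_n_iy. unfold Cmult, RtoC, alpha. simpl. ring. Qed.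
Lemma term_snd k (y : R) j :
  snd (Cmult (RtoC (k j / INR (Factorial.fact j))) (pow_n (K := C_Ring) ((0%R, y) : C) j)) = beta k j * y ^ j.
Proof. rewrite pow_n_iy. unfold Cmult, RtoC, beta. simpl. ring. Qed.

Lemma series_to_pseries (a : nat -> R) y l :
  is_series (fun j => a j * y ^ j) l -> PSeries a y = l.
Proof.
  intros H. apply is_pseries_unique. unfold is_pseries.
  eapply is_series_ext; [|exact H]. intros n. cbv beta. change (scal (pow_n y n) (a n)) with (pow_n (K := R_AbsRing) y n * a n). replace (pow_n (K := R_AbsRing) y n) with (y ^ n) by (symmetry; apply pow_n_pow). apply Rmult_comm.
Qed.

Lemma series_radius (a : nat -> R) y l : 0 < y ->
  is_series (fun j => a j * y ^ j) l -> Rbar_le y (CV_radius a).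
Proof.
  intros Hy H.
  assert (H0 : is_lim_seq (fun j => a j * y ^ j) 0) by (apply ex_series_lim_0; exists l; exact H).
  destruct (filterlim_bounded (K := R_AbsRing) (V := R_NormedModule) (fun j => a j * y ^ j)) as [M HM].
  { exists 0. exact H0. }
  apply radius_of_bounded with M. intros n. exact (HM n).
Qed.

Lemma cum_repr t k : is_cumulants t k ->
  Rbar_lt 0 (CV_radius (alpha k)) /\ Rbar_lt 0 (CV_radius (beta k)) /\
  exists d, 0 < d /\ forall y, Rabs y < d ->
    RcY t y = exp (PSeries (alpha k) y) * cos (PSeries (beta k) y) /\
    IcY t y = exp (PSeries (alpha k) y) * sin (PSeries (beta k) y).
Proof.
  intros [r [Hr H]]. pose proof PI_pos' as HPI.
  assert (Hrep : forall y, Rabs y < 2 * PI * r ->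
    exists L : C, is_series (fun j => alpha k j * y ^ j) (fst L) /\
                  is_series (fun j => beta k j * y ^ j) (snd L) /\
                  cexp L = charf t (y / (2*PI))).
  { intros y Hy.
    assert (Ht : Rabs (y / (2*PI)) < r).
    { unfold Rdiv. rewrite Rabs_mult, (Rabs_right (/ (2*PI))).
      apply Rmult_lt_reg_r with (2*PI). lra. rewrite Rmult_assoc, Rinv_l by lra. lra.
      apply Rle_ge, Rlt_le, Rinv_0_lt_compat. lra. }
    destruct (H _ Ht) as [L [Hs Hc]]. exists L. split; [|split]; auto.
    - apply is_series_fst in Hs. eapply is_series_ext; [|exact Hs]. intros n.
      replace (2 * PI * (y / (2 * PI))) with y by (field; lra). apply term_fst.
    - apply is_series_snd in Hs. eapply is_series_ext; [|exact Hs]. intros n.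
      replace (2 * PI * (y / (2 * PI))) with y by (field; lra). apply term_snd. }
  assert (HPr : 0 < PI * r) by (apply Rmult_lt_0_compat; lra).
  assert (Hy0 : Rabs (PI * r) < 2 * PI * r) by (rewrite Rabs_right; lra).
  destruct (Hrep _ Hy0) as [L0 [H1 [H2 _]]].
  split; [|split].
  - eapply Rbar_lt_le_trans; [|apply (series_radius _ _ _ HPr H1)]. simpl. lra.
  - eapply Rbar_lt_le_trans; [|apply (series_radius _ _ _ HPr H2)]. simpl. lra.
  - exists (2 * PI * r). split. lra. intros y Hy.
    destruct (Hrep y Hy) as [L [E1 [E2 E3]]].
    apply series_to_pseries in E1. apply series_to_pseries in E2.
    unfold RcY, IcY. rewrite charf_eq in E3. unfold cexp in E3. injection E3 as E4 E5.
    rewrite E1, E2, <- E4, <- E5. split; reflexivity.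
Qed.


Definition AP k := mkP (alpha k 0) (alpha k 1) (alpha k 2) (alpha k 3) (alpha k 4) (alpha k 5).
Definition BP k := mkP (beta k 0) (beta k 1) (beta k 2) (beta k 3) (beta k 4) (beta k 5).
Definition REP k := pmul (pcomp pexp (AP k)) (pcomp pcos (BP k)).
Definition IMP k := pmul (pcomp pexp (AP k)) (pcomp psin (BP k)).

Lemma AP_eq k : AP k = mkP (k 0%nat) 0 (- k 2%nat / 2) 0 (k 4%nat / 24) 0.
Proof. unfold AP, alpha. simpl. f_equal; field. Qed.
Lemma BP_eq k : BP k = mkP 0 (k 1%nat) 0 (- k 3%nat / 6) 0 (k 5%nat / 120).
Proof. unfold BP, beta. simpl. f_equal; field. Qed.

Lemma Rc_at0' t : RcY t 0 = 1.
Proof. unfold RcY. replace (0 / (2*PI)) with 0 by (field; pose proof PI_pos'; lra). apply Rc_at0. Qed.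

Lemma kappa0 t k : is_cumulants t k -> k 0%nat = 0.
Proof.
  intros H. destruct (cum_repr t k H) as [_ [_ [d [Hd Hr]]]].
  destruct (Hr 0 ltac:(rewrite Rabs_R0; lra)) as [E _].
  rewrite Rc_at0', !PSeries_0 in E. unfold alpha, beta in E. simpl in E.
  rewrite Rmult_0_r, cos_0 in E.
  replace (k 0%nat / 1 * 1) with (k 0%nat) in E by field.
  assert (H0 : exp (k 0%nat) = 1) by lra.
  rewrite <- (ln_exp (k 0%nat)), H0. apply ln_1.
Qed.

Lemma approx_RI t k : is_cumulants t k -> approx (RcY t) (REP k) /\ approx (IcY t) (IMP k).
Proof.
  intros H. pose proof (kappa0 t k H) as H0.
  destruct (cum_repr t k H) as [Ra [Rb [d [Hd Hr]]]].
  assert (A0 : cf0 (AP k) = 0) by (rewrite AP_eq; simpl; auto).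
  assert (B0 : cf0 (BP k) = 0) by (rewrite BP_eq; simpl; auto).
  assert (HA : approx (fun y => exp (PSeries (alpha k) y)) (pcomp pexp (AP k))).
  { apply approx_comp; auto. apply approx_exp. apply approx_PSeries; auto. }
  split.
  - apply approx_loc with (fun y => exp (PSeries (alpha k) y) * cos (PSeries (beta k) y)).
    + apply approx_mul; auto. apply approx_comp; auto. apply approx_cos. apply approx_PSeries; auto.
    + exists d. split; auto. intros y Hy. apply (Hr y Hy).
  - apply approx_loc with (fun y => exp (PSeries (alpha k) y) * sin (PSeries (beta k) y)).
    + apply approx_mul; auto. apply approx_comp; auto. apply approx_sin. apply approx_PSeries; auto.
    + exists d. split; auto. intros y Hy. apply (Hr y Hy).
Qed.

Definition m1 (k : nat -> R) : R := k 1%nat.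
Definition m2 (k : nat -> R) : R := k 2%nat + k 1%nat ^ 2.
Definition m3 (k : nat -> R) : R := k 3%nat + 3 * k 1%nat * k 2%nat + k 1%nat ^ 3.
Definition m4 (k : nat -> R) : R := k 4%nat + 4 * k 1%nat * k 3%nat + 3 * k 2%nat ^ 2 + 6 * k 1%nat ^ 2 * k 2%nat + k 1%nat ^ 4.
Definition m5 (k : nat -> R) : R := k 5%nat + 5 * k 1%nat * k 4%nat + 10 * k 2%nat * k 3%nat + 10 * k 1%nat ^ 2 * k 3%nat
   + 15 * k 1%nat * k 2%nat ^ 2 + 10 * k 1%nat ^ 3 * k 2%nat + k 1%nat ^ 5.

Lemma REP_eq k : k 0%nat = 0 -> REP k = mkP 1 0 (- m2 k / 2) 0 (m4 k / 24) 0.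
Proof.
  intros H0. unfold REP. rewrite AP_eq, BP_eq, H0. unfold m2, m4, pcomp, pexp, pcos.
  simpl. f_equal; field.
Qed.

Lemma IMP_eq k : k 0%nat = 0 -> IMP k = mkP 0 (m1 k) 0 (- m3 k / 6) 0 (m5 k / 120).
Proof.
  intros H0. unfold IMP. rewrite AP_eq, BP_eq, H0. unfold m1, m3, m5, pcomp, pexp, psin.
  simpl. f_equal; field.
Qed.


Lemma angle_y y : 2 * PI * (y / (2 * PI)) = y.
Proof. pose proof PI_pos'. field. lra. Qed.

Lemma RcY_even t y : RcY (2*t) y = RcY t y.
Proof. unfold RcY. apply Rc_even. Qed.
Lemma IcY_even t y : IcY (2*t) y = IcY t y.
Proof. unfold IcY. apply Ic_even. Qed.

Lemma RcY_odd t y : RcY (2*t+1) y =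
  /2 * (cos y * RcY t y + (-1) * (sin y * IcY t y)) + /2 * (cos y * RcY (t+1) y + sin y * IcY (t+1) y).
Proof. unfold RcY, IcY. rewrite Rc_odd, angle_y. ring. Qed.
Lemma IcY_odd t y : IcY (2*t+1) y =
  /2 * (sin y * RcY t y + cos y * IcY t y) + /2 * ((-1) * (sin y * RcY (t+1) y) + cos y * IcY (t+1) y).
Proof. unfold RcY, IcY. rewrite Ic_odd, angle_y. ring. Qed.

Section Eqs.
Variable k : nat -> nat -> R.
Hypothesis Hk : forall t, is_cumulants t (k t).

Lemma k0 t : k t 0%nat = 0.
Proof. apply (kappa0 t), Hk. Qed.

Lemma mom_even t :
  m1 (k (2*t)%nat) = m1 (k t) /\ m2 (k (2*t)%nat) = m2 (k t) /\ m3 (k (2*t)%nat) = m3 (k t) /\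
  m4 (k (2*t)%nat) = m4 (k t) /\ m5 (k (2*t)%nat) = m5 (k t).
Proof.
  destruct (approx_RI _ _ (Hk t)) as [R1 I1].
  destruct (approx_RI _ _ (Hk (2*t)%nat)) as [R2 I2].
  assert (R1' : approx (RcY (2*t)) (REP (k t))).
  { apply approx_loc with (RcY t); auto. exists 1. split. lra. intros; apply RcY_even. }
  assert (I1' : approx (IcY (2*t)) (IMP (k t))).
  { apply approx_loc with (IcY t); auto. exists 1. split. lra. intros; apply IcY_even. }
  destruct (approx_unique _ _ _ R2 R1') as [_ [_ [E2 [_ [E4 _]]]]].
  destruct (approx_unique _ _ _ I2 I1') as [_ [E1 [_ [E3 [_ E5]]]]].
  rewrite !REP_eq, !IMP_eq in * by apply k0. simpl in *.
  repeat split; lra.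
Qed.

Definition QR a b := padd (pscal (/2) (padd (pmul pcos (REP a)) (pscal (-1) (pmul psin (IMP a)))))
                          (pscal (/2) (padd (pmul pcos (REP b)) (pmul psin (IMP b)))).
Definition QI a b := padd (pscal (/2) (padd (pmul psin (REP a)) (pmul pcos (IMP a))))
                          (pscal (/2) (padd (pscal (-1) (pmul psin (REP b))) (pmul pcos (IMP b)))).

Lemma mom_odd t :
  let a := k t in let b := k (t+1)%nat in let c := k (2*t+1)%nat in
  m1 c = / 2 * (m1 a + m1 b) /\
  m2 c = / 2 * (m2 a + 2 * m1 a + 1 + m2 b - 2 * m1 b + 1) /\
  m3 c = / 2 * (m3 a + 3 * m2 a + 3 * m1 a + 1 + m3 b - 3 * m2 b + 3 * m1 b - 1) /\
  m4 c = / 2 * (m4 a + 4 * m3 a + 6 * m2 a + 4 * m1 a + 1 + m4 b - 4 * m3 b + 6 * m2 b - 4 * m1 b + 1) /\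
  m5 c = / 2 * (m5 a + 5 * m4 a + 10 * m3 a + 10 * m2 a + 5 * m1 a + 1
               + m5 b - 5 * m4 b + 10 * m3 b - 10 * m2 b + 5 * m1 b - 1).
Proof.
  intros a b c.
  destruct (approx_RI _ _ (Hk t)) as [Ra Ia].
  destruct (approx_RI _ _ (Hk (t+1)%nat)) as [Rb Ib].
  destruct (approx_RI _ _ (Hk (2*t+1)%nat)) as [Rc' Ic'].
  assert (HR : approx (RcY (2*t+1)) (QR (k t) (k (t+1)%nat))).
  { eapply approx_loc; [| exists 1; split; [lra|]; intros y _; apply RcY_odd].
    unfold QR. apply approx_plus; apply approx_scal; [apply approx_plus|apply approx_plus];
      try apply approx_scal; apply approx_mul; auto using approx_cos, approx_sin. }
  assert (HI : approx (IcY (2*t+1)) (QI (k t) (k (t+1)%nat))).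
  { eapply approx_loc; [| exists 1; split; [lra|]; intros y _; apply IcY_odd].
    unfold QI. apply approx_plus; apply approx_scal; [apply approx_plus|apply approx_plus];
      try apply approx_scal; apply approx_mul; auto using approx_cos, approx_sin. }
  destruct (approx_unique _ _ _ Rc' HR) as [_ [_ [E2 [_ [E4 _]]]]].
  destruct (approx_unique _ _ _ Ic' HI) as [_ [E1 [_ [E3 [_ E5]]]]].
  unfold QR, QI in *.
  rewrite !REP_eq, !IMP_eq in * by apply k0. unfold pcos, psin in *. simpl in *.
  fold a b c in E1, E2, E3, E4, E5.
  repeat split; lra.
Qed.

End Eqs.


Section Final.
Variable k : nat -> nat -> R.
Hypothesis Hk : forall t, is_cumulants t (k t).

Lemma m1_zero0 : m1 (k 0%nat) = 0.
Proof.
  destruct (approx_RI _ _ (Hk 0%nat)) as [_ I0].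
  assert (I0' : approx (IcY 0) (pconst 0)).
  { apply approx_loc with (fun _ => 0). apply approx_const. exists 1. split. lra.
    intros. unfold IcY. apply Ic_0. }
  destruct (approx_unique _ _ _ I0 I0') as [_ [E1 _]].
  rewrite IMP_eq in E1 by (apply (k0 k Hk)). simpl in E1. exact E1.
Qed.

Lemma k1_zero t : k t 1%nat = 0.
Proof.
  induction t as [t IH] using (well_founded_induction lt_wf).
  change (k t 1%nat) with (m1 (k t)).
  destruct (Nat.Even_or_Odd t) as [[m Hm]|[m Hm]]; subst t.
  - destruct m. apply m1_zero0.
    destruct (mom_even k Hk (S m)) as [E _]. rewrite E. apply IH. lia.
  - destruct m.
    + destruct (mom_odd k Hk 0) as [E _]. simpl in E. change (m1 (k 1%nat) = 0).
      rewrite m1_zero0 in E. lra.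
    + destruct (mom_odd k Hk (S m)) as [E _]. cbv zeta in E. rewrite E.
      unfold m1. rewrite (IH (S m)), (IH (S m + 1)%nat) by lia. lra.
Qed.

Lemma even_rel t j : (2 <= j <= 5)%nat -> k (2*t)%nat j = k t j.
Proof.
  intros Hj. destruct (mom_even k Hk t) as [_ [E2 [E3 [E4 E5]]]].
  unfold m2, m3, m4, m5 in *. rewrite !k1_zero in *.
  assert (A2 : k (2*t)%nat 2%nat = k t 2%nat) by nra.
  assert (A3 : k (2*t)%nat 3%nat = k t 3%nat) by nra.
  rewrite A2, A3 in *.
  assert (A4 : k (2*t)%nat 4%nat = k t 4%nat) by nra.
  assert (A5 : k (2*t)%nat 5%nat = k t 5%nat) by nra.
  destruct j as [|[|[|[|[|[|j]]]]]]; try lia; auto.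
Qed.

Definition F2 (d2 : R) := 1 + d2 / 2.
Definition F3 (d2 d3 : R) := d3 / 2 - 3 * d2 / 2.
Definition F4 (d2 d3 d4 : R) := d4 / 2 - 2 * d3 + 3 * d2 ^ 2 / 4 - 2.
Definition F5 (d2 d3 d4 d5 : R) := d5 / 2 - 5 * d4 / 2 + 5 * d2 * d3 / 2 + 10 * d2.

Lemma odd_rel t :
  let a := k t in let b := k (t+1)%nat in let c := k (2*t+1)%nat in
  let d j := b j - a j in
  c 2%nat - a 2%nat = F2 (d 2%nat) /\
  c 3%nat - a 3%nat = F3 (d 2%nat) (d 3%nat) /\
  c 4%nat - a 4%nat = F4 (d 2%nat) (d 3%nat) (d 4%nat) /\
  c 5%nat - a 5%nat = F5 (d 2%nat) (d 3%nat) (d 4%nat) (d 5%nat).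
Proof.
  intros a b c d. destruct (mom_odd k Hk t) as [_ [E2 [E3 [E4 E5]]]].
  fold a b c in E2, E3, E4, E5.
  unfold d, F2, F3, F4, F5, m1, m2, m3, m4, m5 in *. unfold a, b, c in *.
  rewrite !k1_zero in *.
  set (a2 := k t 2%nat) in *. set (a3 := k t 3%nat) in *. set (a4 := k t 4%nat) in *. set (a5 := k t 5%nat) in *.
  set (b2 := k (t+1)%nat 2%nat) in *. set (b3 := k (t+1)%nat 3%nat) in *.
  set (b4 := k (t+1)%nat 4%nat) in *. set (b5 := k (t+1)%nat 5%nat) in *.
  set (c2 := k (2*t+1)%nat 2%nat) in *. set (c3 := k (2*t+1)%nat 3%nat) in *.
  set (c4 := k (2*t+1)%nat 4%nat) in *. set (c5 := k (2*t+1)%nat 5%nat) in *.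
  assert (H2 : c2 = /2 * (a2 + b2 + 2)) by lra.
  assert (H3 : c3 = /2 * (a3 + 3 * a2 + b3 - 3 * b2)) by lra.
  rewrite H2, H3 in E4, E5.
  assert (H4 : c4 = /2 * (a4 + 3 * a2 ^ 2 + 4 * a3 + 6 * a2 + 1 + b4 + 3 * b2 ^ 2 - 4 * b3 + 6 * b2 + 1)
                   - 3 * (/2 * (a2 + b2 + 2)) ^ 2) by lra.
  rewrite H4 in E5.
  assert (H5 : c5 = /2 * (a5 + 10 * a2 * a3 + 5 * (a4 + 3 * a2 ^ 2) + 10 * a3 + 10 * a2
                  + b5 + 10 * b2 * b3 - 5 * (b4 + 3 * b2 ^ 2) + 10 * b3 - 10 * b2)
                  - 10 * (/2 * (a2 + b2 + 2)) * (/2 * (a3 + 3 * a2 + b3 - 3 * b2))) by lra.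
  rewrite H2, H3, H4, H5. repeat split; field.
Qed.

Definition Bd (x y z w : R) := Rabs x <= 2 /\ Rabs y <= 6 /\ Rabs z <= 28 /\ Rabs w <= 240.

Lemma bound_F d2 d3 d4 d5 : Bd d2 d3 d4 d5 ->
  Bd (F2 d2) (F3 d2 d3) (F4 d2 d3 d4) (F5 d2 d3 d4 d5) /\
  Bd (d2 - F2 d2) (d3 - F3 d2 d3) (d4 - F4 d2 d3 d4) (d5 - F5 d2 d3 d4 d5).
Proof.
  intros [B2 [B3 [B4 B5]]]. unfold Bd, F2, F3, F4, F5.
  apply Rabs_le_between in B2. apply Rabs_le_between in B3.
  apply Rabs_le_between in B4. apply Rabs_le_between in B5.
  assert (Q : 0 <= d2 ^ 2 <= 4) by nra.
  assert (P : - 12 <= d2 * d3 <= 12) by nra.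
  repeat split; apply Rabs_le; split; nra.
Qed.

Definition D t := Bd (k (S t) 2%nat - k t 2%nat) (k (S t) 3%nat - k t 3%nat)
                     (k (S t) 4%nat - k t 4%nat) (k (S t) 5%nat - k t 5%nat).

Lemma D_all t : D t.
Proof.
  induction t as [t IH] using (well_founded_induction lt_wf).
  destruct (Nat.Even_or_Odd t) as [[m Hm]|[m Hm]]; subst t.
  - destruct m.
    +
      destruct (odd_rel 0) as [E2 [E3 [E4 E5]]]. simpl in E2, E3, E4, E5. unfold D. simpl.
      unfold F2, F3, F4, F5 in *.
      set (x2 := k 1%nat 2%nat - k 0%nat 2%nat) in *. set (x3 := k 1%nat 3%nat - k 0%nat 3%nat) in *.
      set (x4 := k 1%nat 4%nat - k 0%nat 4%nat) in *. set (x5 := k 1%nat 5%nat - k 0%nat 5%nat) in *.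
      assert (X2 : x2 = 2) by lra. rewrite X2 in *.
      assert (X3 : x3 = -6) by lra. rewrite X3 in *.
      assert (X4 : x4 = 26) by lra. rewrite X4 in *.
      assert (X5 : x5 = -150) by lra. rewrite X5.
      unfold Bd. repeat split; apply Rabs_le; lra.
    + destruct (odd_rel (S m)) as [E2 [E3 [E4 E5]]].
      assert (HD := IH (S m) ltac:(lia)). unfold D in HD |- *.
      destruct (bound_F _ _ _ _ HD) as [HF _].
      replace (S (2 * S m)) with (2 * S m + 1)%nat by lia.
      rewrite !(even_rel (S m)) by lia.
      replace (S (S m)) with (S m + 1)%nat in HF by lia.
      rewrite E2, E3, E4, E5. exact HF.
  - destruct (odd_rel m) as [E2 [E3 [E4 E5]]].
    assert (HD := IH m ltac:(lia)). unfold D in HD |- *.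
    destruct (bound_F _ _ _ _ HD) as [_ HG].
    replace (S (2 * m + 1)) with (2 * (m + 1))%nat by lia.
    rewrite !(even_rel (m + 1)) by lia.
    replace (S m) with (m + 1)%nat in HG by lia.
    replace (k (m+1)%nat 2%nat - k (2*m+1)%nat 2%nat) with
      ((k (m+1)%nat 2%nat - k m 2%nat) - (k (2*m+1)%nat 2%nat - k m 2%nat)) by ring.
    replace (k (m+1)%nat 3%nat - k (2*m+1)%nat 3%nat) with
      ((k (m+1)%nat 3%nat - k m 3%nat) - (k (2*m+1)%nat 3%nat - k m 3%nat)) by ring.
    replace (k (m+1)%nat 4%nat - k (2*m+1)%nat 4%nat) with
      ((k (m+1)%nat 4%nat - k m 4%nat) - (k (2*m+1)%nat 4%nat - k m 4%nat)) by ring.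
    replace (k (m+1)%nat 5%nat - k (2*m+1)%nat 5%nat) with
      ((k (m+1)%nat 5%nat - k m 5%nat) - (k (2*m+1)%nat 5%nat - k m 5%nat)) by ring.
    rewrite E2, E3, E4, E5. exact HG.
Qed.

End Final.

Theorem lemma2p2 (kappa : nat -> nat -> R)
  (Hkappa : forall t : nat, is_cumulants t (kappa t)) (t : nat) :
  Rabs (kappa (S t) 2%nat - kappa t 2%nat) <= 2 /\
  Rabs (kappa (S t) 3%nat - kappa t 3%nat) <= 6 /\
  Rabs (kappa (S t) 4%nat - kappa t 4%nat) <= 28 /\
  Rabs (kappa (S t) 5%nat - kappa t 5%nat) <= 240.
Proof.
  exact (D_all kappa Hkappa t).
Qed.
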